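(* Let $|q|<1$ and let $(\alpha_n(a,q),\beta_n(a,q))$ be sequences depending on $a$ and base $q$ such that $(\alpha_n(a,q),\beta_n(a,q))$ and $(\alpha_n(-a,q),\beta_n(-a,q))$ are Bailey pairs with respect to $a$ and $-a$ respectively (base $q$), and $(\alpha_n(a^2,q^2),\beta_n(a^2,q^2))$ is a Bailey pair with respect to $a^2$ with base $q^2$. Assume $|qa|<|z|$, no denominator vanishes, and all series converge absolutely. Then \begin{multline*} \sum_{n=1}^{\infty} (z;q)_{n}(q;q)_{n-1} \left( \frac{q a}{ z}\right )^{n} \beta_n(a,q) + \sum_{n=1}^{\infty}(z;q)_{n}(q;q)_{n-1}\left( \frac{-q a}{ z }\right )^{n}\beta_n(-a,q) -2 \sum_{n=1}^{\infty}(z^2;q^2)_{n}(q^2;q^2)_{n-1}\left( \frac{q^2 a^2}{ z^2 }\right )^{n}\beta_n(a^2,q^2)\\ =\sum_{n=1}^{\infty}\frac{(z;q)_{n}(q;q)_{n-1}}{(q a ,q a/z;q)_n}\left (\frac{q a}{z}\right)^{n}\alpha_n(a,q) +\sum_{n=1}^{\infty}\frac{(z;q)_{n}(q;q)_{n-1}}{(-q a ,-q a/z;q)_n}\left (\frac{-q a}{z}\right)^{n}\alpha_n(-a,q) -2\sum_{n=1}^{\infty}\frac{(z^2;q^2)_{n}(q^2;q^2)_{n-1}}{(q^2 a^2 ,q^2a^2/z^2;q^2)_n}\left (\frac{q^2a^2}{z^2}\right)^{n}\alpha_n(a^2,q^2). \end{multline*}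
   Context: Notation: $(x;q)_n=(1-x)(1-xq)\cdots(1-xq^{n-1})$, $(x;q)_0=1$, $(x_1,\dots,x_m;q)_n=(x_1;q)_n\cdots(x_m;q)_n$. A Bailey pair with respect to $a$ (base $q$) is a pair of sequences $(\alpha_n,\beta_n)_{n\ge0}$ with $\alpha_0=\beta_0=1$ and, for $n>0$, $\beta_n=\sum_{j=0}^{n}\frac{\alpha_j}{(q;q)_{n-j}(aq;q)_{n+j}}$. *)

(* Defs.v *)
From Stdlib Require Import Reals.
Open Scope R_scope.

Record Cx : Type := mkC { Re : R; Im : R }.

Definition RtoC (x : R) : Cx := mkC x 0.
Definition C0 : Cx := RtoC 0.
Definition C1 : Cx := RtoC 1.
Definition Cadd (u v : Cx) : Cx := mkC (Re u + Re v) (Im u + Im v).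
Definition Copp (u : Cx) : Cx := mkC (- Re u) (- Im u).
Definition Csub (u v : Cx) : Cx := Cadd u (Copp v).
Definition Cmul (u v : Cx) : Cx :=
  mkC (Re u * Re v - Im u * Im v) (Re u * Im v + Im u * Re v).
Definition Cinv (u : Cx) : Cx :=
  let d := Re u * Re u + Im u * Im u in mkC (Re u / d) (- Im u / d).
Definition Cdiv (u v : Cx) : Cx := Cmul u (Cinv v).
Fixpoint Cpow (u : Cx) (n : nat) : Cx :=
  match n with O => C1 | S m => Cmul (Cpow u m) u end.
Definition Cnorm (u : Cx) : R := sqrt (Re u * Re u + Im u * Im u).

Fixpoint qpoch (x q : Cx) (n : nat) : Cx :=
  match n with
  | O => C1
  | S m => Cmul (qpoch x q m) (Csub C1 (Cmul x (Cpow q m)))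
  end.

Fixpoint Csum0 (f : nat -> Cx) (n : nat) : Cx :=
  match n with O => f O | S m => Cadd (Csum0 f m) (f (S m)) end.

Fixpoint Cpartial1 (f : nat -> Cx) (N : nat) : Cx :=
  match N with O => C0 | S m => Cadd (Cpartial1 f m) (f (S m)) end.

Definition Cseries1_to (f : nat -> Cx) (l : Cx) : Prop :=
  forall eps : R, eps > 0 ->
    exists N : nat, forall n : nat, (n >= N)%nat -> Cnorm (Csub (Cpartial1 f n) l) < eps.

Definition Cseries1_abs_conv (f : nat -> Cx) : Prop :=
  exists M : R, Un_cv (fun N => sum_f_R0 (fun k => Cnorm (f (S k))) N) M.

Definition bailey_pair (a q : Cx) (alpha beta : nat -> Cx) : Prop :=
  alpha O = C1 /\ beta O = C1 /\
  forall n : nat, (n > 0)%nat ->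
    beta n = Csum0 (fun j => Cdiv (alpha j)
                     (Cmul (qpoch q q (n - j)) (qpoch (Cmul a q) q (n + j)))) n.

(* Main.v *)
From Stdlib Require Import Reals Lra Lia FunctionalExtensionality.
From Coquelicot Require Import Coquelicot.
Open Scope C_scope.

Fixpoint qp (x q : C) (n : nat) : C :=
  match n with O => 1 | S m => qp x q m * (1 - x * q ^ m) end.
Fixpoint csum (f : nat -> C) (n : nat) : C :=
  match n with O => 0 | S m => csum f m + f m end.
Fixpoint rsum (f : nat -> R) (n : nat) : R :=
  match n with O => 0%R | S m => (rsum f m + f m)%R end.
Definition conv (s : nat -> C) (l : C) : Prop :=
  forall eps : R, (eps > 0)%R -> exists N : nat, forall n : nat, (n >= N)%nat -> (Cmod (s n - l) < eps)%R.
Definition conv1 (f : nat -> C) (l : C) := conv (fun N => csum (fun k => f (S k)) N) l.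

Lemma Cmod_sub_le (x y : C) : (Cmod (x - y) <= Cmod x + Cmod y)%R.
Proof. unfold Cminus. eapply Rle_trans. apply Cmod_triangle. rewrite Cmod_opp. lra. Qed.

Lemma Cmod_rev (x y : C) : (Cmod x - Cmod y <= Cmod (x - y))%R.
Proof.
  assert (H := Cmod_triangle (x - y) y).
  replace (x - y + y) with x in H by ring. lra.
Qed.

Lemma Cmod_1_sub (x : C) : (1 - Cmod x <= Cmod (1 - x))%R.
Proof. assert (H := Cmod_rev 1 x). rewrite Cmod_1 in H. exact H. Qed.

Lemma Cmod_pos_of_ne (x : C) : x <> 0 -> (0 < Cmod x)%R.
Proof. intros H. destruct (Cmod_gt_0 x) as [H1 _]. exact (H1 H). Qed.

Lemma one_sub_ne0 (x : C) : (Cmod x < 1)%R -> 1 - x <> 0.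
Proof.
  intros H E. assert (H2 := Cmod_1_sub x). rewrite E, Cmod_0 in H2. lra.
Qed.

Lemma pow_le_1 (r : R) n : (0 <= r <= 1)%R -> (r ^ n <= 1)%R.
Proof. intros [H0 H1]. induction n; simpl. lra.
  replace 1%R with (1*1)%R by ring. apply Rmult_le_compat; auto; try lra. apply pow_le; auto. Qed.

Lemma Cmod_pow_lt1 (q : C) n : (Cmod q < 1)%R -> (Cmod (q ^ n) <= 1)%R.
Proof. intros. rewrite Cmod_pow. apply pow_le_1. split; [apply Cmod_ge_0|lra]. Qed.

Lemma Cmod_powS_lt1 (q : C) n : (Cmod q < 1)%R -> (Cmod (q ^ S n) < 1)%R.
Proof. intros. rewrite Cpow_S, Cmod_mult.
  assert (H1 := Cmod_pow_lt1 q n H). assert (0 <= Cmod (q^n))%R by apply Cmod_ge_0.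
  assert (0 <= Cmod q)%R by apply Cmod_ge_0. nra. Qed.

Lemma one_sub_powS_ne0 (q : C) n : (Cmod q < 1)%R -> 1 - q ^ S n <> 0.
Proof. intros. apply one_sub_ne0, Cmod_powS_lt1; auto. Qed.

Lemma qp_S (x q : C) n : qp x q (S n) = qp x q n * (1 - x * q ^ n).
Proof. reflexivity. Qed.

Lemma qp_add (x q : C) m k : qp x q (m + k) = qp x q m * qp (x * q ^ m) q k.
Proof.
  induction k. simpl. rewrite Nat.add_0_r. ring.
  rewrite Nat.add_succ_r. simpl. rewrite IHk. rewrite Cpow_add_r. ring.
Qed.

Lemma qp_S_left (x q : C) n : qp x q (S n) = (1 - x) * qp (x * q) q n.
Proof.
  replace (S n) with (1 + n)%nat by lia. rewrite qp_add. simpl. f_equal; [ring|]. f_equal. ring.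
Qed.

Lemma qp_ext (x y q : C) n : x = y -> qp x q n = qp y q n.
Proof. intros ->; auto. Qed.

Lemma qp_qq_ne0 (q : C) n : (Cmod q < 1)%R -> qp q q n <> 0.
Proof.
  intros H. induction n; simpl. apply C1_nz.
  apply Cmult_neq_0; auto.
  replace (q * q ^ n) with (q ^ S n) by reflexivity. apply one_sub_powS_ne0; auto.
Qed.

Lemma qp_zero (q : C) n : qp 0 q n = 1.
Proof. induction n; simpl; auto. rewrite IHn. ring. Qed.

Lemma rsum_geom (r : R) n : (rsum (fun k => r ^ k) n * (1 - r) = 1 - r ^ n)%R.
Proof. induction n; simpl. ring. rewrite Rmult_plus_distr_r, IHn. ring. Qed.

Lemma rsum_geom_le (r : R) n : (0 <= r < 1)%R -> (rsum (fun k => r ^ k) n <= / (1 - r))%R.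
Proof.
  intros Hr. assert (H := rsum_geom r n). assert (0 <= r ^ n)%R by (apply pow_le; lra).
  apply (Rmult_le_reg_r (1 - r)). lra. rewrite H, Rinv_l by lra. lra.
Qed.

Lemma rsum_nonneg (f : nat -> R) n : (forall k, 0 <= f k)%R -> (0 <= rsum f n)%R.
Proof. intros H; induction n; simpl. lra. specialize (H n). lra. Qed.

Lemma Cmod_qpfac (w q : C) n : (Cmod (1 - w * q ^ n) <= 1 + Cmod w * Cmod q ^ n)%R.
Proof. eapply Rle_trans. apply Cmod_sub_le. rewrite Cmod_1, Cmod_mult, Cmod_pow. lra. Qed.

Lemma qp_upper_aux (w q : C) n :
  (Cmod (qp w q n) <= exp (Cmod w * rsum (fun k => Cmod q ^ k) n))%R.
Proof.
  induction n; simpl. rewrite Cmod_1, Rmult_0_r, exp_0. lra.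
  rewrite Cmod_mult, Rmult_plus_distr_l, exp_plus.
  apply Rmult_le_compat; try apply Cmod_ge_0. auto.
  eapply Rle_trans. apply Cmod_qpfac. apply exp_ineq1_le.
Qed.

Definition UB (w q : C) : R := exp (Cmod w / (1 - Cmod q)).

Lemma UB_pos w q : (0 < UB w q)%R.
Proof. apply exp_pos. Qed.

Lemma exp_mono (x y : R) : (x <= y)%R -> (exp x <= exp y)%R.
Proof. intros H. destruct (Rle_lt_or_eq_dec _ _ H). left; apply exp_increasing; auto. subst; lra. Qed.

Lemma s_le (w q : C) n : (Cmod q < 1)%R ->
  (Cmod w * rsum (fun k => Cmod q ^ k) n <= Cmod w / (1 - Cmod q))%R.
Proof.
  intros Hq. unfold Rdiv. apply Rmult_le_compat_l. apply Cmod_ge_0.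
  apply rsum_geom_le. split; [apply Cmod_ge_0|lra].
Qed.

Lemma qp_upper (w q : C) n : (Cmod q < 1)%R -> (Cmod (qp w q n) <= UB w q)%R.
Proof.
  intros Hq. eapply Rle_trans. apply qp_upper_aux. unfold UB. apply exp_mono. apply s_le; auto.
Qed.

Lemma qp_sub1_aux (w q : C) n : (Cmod q < 1)%R ->
  (Cmod (qp w q n - 1) <= UB w q * Cmod w * rsum (fun k => Cmod q ^ k) n)%R.
Proof.
  intros Hq. induction n; simpl.
  replace (1 - 1) with (RtoC 0) by ring. rewrite Cmod_0. lra.
  replace (qp w q n * (1 - w * q ^ n) - 1) with ((qp w q n - 1) - qp w q n * (w * q ^ n)) by ring.
  eapply Rle_trans. apply Cmod_sub_le. rewrite !Cmod_mult, Cmod_pow.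
  assert (H1 := qp_upper w q n Hq).
  assert (0 <= Cmod w * Cmod q ^ n)%R. apply Rmult_le_pos. apply Cmod_ge_0. apply pow_le, Cmod_ge_0.
  assert (Cmod (qp w q n) * (Cmod w * Cmod q ^ n) <= UB w q * (Cmod w * Cmod q ^ n))%R.
  apply Rmult_le_compat_r; auto.
  nra.
Qed.

Lemma qp_sub1 (w q : C) n : (Cmod q < 1)%R ->
  (Cmod (qp w q n - 1) <= UB w q * (Cmod w / (1 - Cmod q)))%R.
Proof.
  intros Hq. eapply Rle_trans. apply qp_sub1_aux; auto. rewrite Rmult_assoc.
  apply Rmult_le_compat_l. left; apply UB_pos. apply s_le; auto.
Qed.

Lemma qp_lower_small (w q : C) n : (Cmod q < 1)%R ->
  (UB w q * (Cmod w / (1 - Cmod q)) <= / 2)%R -> (/ 2 <= Cmod (qp w q n))%R.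
Proof.
  intros Hq H. assert (H1 := qp_sub1 w q n Hq). assert (H2 := Cmod_rev 1 (qp w q n)).
  rewrite Cmod_1 in H2. replace (1 - qp w q n) with (- (qp w q n - 1)) in H2 by ring.
  rewrite Cmod_opp in H2. lra.
Qed.

Lemma small_cond (w q : C) : (Cmod q < 1)%R -> (Cmod w <= (1 - Cmod q) / 6)%R ->
  (UB w q * (Cmod w / (1 - Cmod q)) <= / 2)%R.
Proof.
  intros Hq Hw. assert (Hr : (0 < 1 - Cmod q)%R) by lra.
  assert (Hs : (0 <= Cmod w / (1 - Cmod q) <= / 6)%R).
  { split. apply Rdiv_le_0_compat; [apply Cmod_ge_0|lra].
    apply (Rmult_le_reg_r (1 - Cmod q)); auto. unfold Rdiv. rewrite Rmult_assoc, Rinv_l by lra. lra. }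
  assert (HU : (UB w q <= 3)%R).
  { unfold UB. eapply Rle_trans. apply exp_mono with (y := 1%R). lra. apply exp_le_3. }
  assert (0 < UB w q)%R by apply UB_pos. nra.
Qed.

Lemma finite_min_lb (f : nat -> R) m0 : (forall m, 0 < f m)%R ->
  exists d, (0 < d)%R /\ forall m, (m <= m0)%nat -> (d <= f m)%R.
Proof.
  intros H. induction m0.
  exists (f 0%nat). split; auto. intros m Hm. assert (m = 0%nat) by lia. subst; lra.
  destruct IHm0 as [d [Hd Hm]]. exists (Rmin d (f (S m0))). split. apply Rmin_pos; auto.
  intros m Hm'. destruct (Nat.eq_dec m (S m0)). subst. apply Rmin_r.
  eapply Rle_trans. apply Rmin_l. apply Hm. lia.
Qed.

Lemma small_pow (c q : C) (eps : R) : (Cmod q < 1)%R -> (0 < eps)%R ->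
  exists m0, forall m, (m >= m0)%nat -> (Cmod (c * q ^ m) <= eps)%R.
Proof.
  intros Hq He. assert (Hy : (0 < eps / (Cmod c + 1))%R).
  { apply Rdiv_lt_0_compat; auto. assert (0 <= Cmod c)%R by apply Cmod_ge_0. lra. }
  destruct (pow_lt_1_zero (Cmod q)) with (y := (eps / (Cmod c + 1))%R) as [N HN]; auto.
  rewrite Rabs_pos_eq; auto. apply Cmod_ge_0.
  exists N. intros m Hm. specialize (HN m Hm). rewrite Rabs_pos_eq in HN by (apply pow_le, Cmod_ge_0).
  rewrite Cmod_mult, Cmod_pow. assert (0 <= Cmod c)%R by apply Cmod_ge_0.
  assert (0 <= Cmod q ^ m)%R by (apply pow_le, Cmod_ge_0).
  assert (Cmod q ^ m * (Cmod c + 1) <= eps)%R.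
  { apply Rlt_le. apply (Rmult_lt_reg_r (/ (Cmod c + 1))). apply Rinv_0_lt_compat; lra.
    rewrite Rmult_assoc, Rinv_r by lra. rewrite Rmult_1_r. exact HN. }
  nra.
Qed.

Lemma qp_lower (c q : C) : (Cmod q < 1)%R -> (forall m, qp c q m <> 0) ->
  exists d, (0 < d)%R /\ forall m, (d <= Cmod (qp c q m))%R.
Proof.
  intros Hq Hc. assert (Hr : (0 < (1 - Cmod q) / 6)%R) by lra.
  destruct (small_pow c q _ Hq Hr) as [m0 Hm0].
  destruct (finite_min_lb (fun m => Cmod (qp c q m)) m0) as [d [Hd Hdm]].
  { intros m. apply Cmod_pos_of_ne; auto. }
  exists (d / 2)%R. split. lra. intros m.
  destruct (Compare_dec.le_lt_dec m m0). specialize (Hdm m l). simpl in Hdm. lra.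
  replace m with (m0 + (m - m0))%nat by lia. rewrite qp_add, Cmod_mult.
  assert (H1 := Hdm m0 (le_n _)). simpl in H1.
  assert (H2 := qp_lower_small (c * q ^ m0) q (m - m0) Hq (small_cond _ _ Hq (Hm0 m0 (le_n _)))).
  nra.
Qed.

Definition tozero (e : nat -> R) : Prop :=
  forall eps : R, (eps > 0)%R -> exists N : nat, forall n, (n >= N)%nat -> (e n < eps)%R.

Lemma conv_by (s : nat -> C) (l : C) (e : nat -> R) N0 :
  (forall n, (n >= N0)%nat -> (Cmod (s n - l) <= e n)%R) -> tozero e -> conv s l.
Proof.
  intros H He eps Heps. destruct (He eps Heps) as [N HN]. exists (max N N0).
  intros n Hn. eapply Rle_lt_trans. apply H; lia. apply HN; lia.
Qed.

Lemma tozero_geom (r : R) : (0 <= r < 1)%R -> tozero (fun n => r ^ n)%R.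
Proof.
  intros Hr eps Heps. destruct (pow_lt_1_zero r) with (y := eps) as [N HN]; auto.
  rewrite Rabs_pos_eq; lra.
  exists N. intros n Hn. specialize (HN n Hn). rewrite Rabs_pos_eq in HN; auto. apply pow_le; lra.
Qed.

Lemma tozero_scal (e : nat -> R) (K : R) : (0 <= K)%R -> tozero e -> tozero (fun n => K * e n)%R.
Proof.
  intros HK He eps Heps. destruct (He (eps / (K + 1))%R) as [N HN].
  apply Rdiv_lt_0_compat; lra.
  exists N. intros n Hn. specialize (HN n Hn).
  destruct (Rle_lt_dec (e n) 0). nra.
  assert (e n * (K + 1) < eps)%R.
  { apply (Rmult_lt_reg_r (/ (K+1))). apply Rinv_0_lt_compat; lra.
    rewrite Rmult_assoc, Rinv_r by lra. rewrite Rmult_1_r. exact HN. }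
  nra.
Qed.

Lemma tozero_add (e f : nat -> R) : tozero e -> tozero f -> tozero (fun n => e n + f n)%R.
Proof.
  intros He Hf eps Heps. destruct (He (eps/2)%R) as [N1 H1]. lra.
  destruct (Hf (eps/2)%R) as [N2 H2]. lra. exists (max N1 N2). intros n Hn.
  specialize (H1 n ltac:(lia)). specialize (H2 n ltac:(lia)). lra.
Qed.

Lemma tozero_le (e f : nat -> R) N0 : (forall n, (n >= N0)%nat -> e n <= f n)%R -> tozero f -> tozero e.
Proof.
  intros H Hf eps Heps. destruct (Hf eps Heps) as [N HN]. exists (max N N0). intros n Hn.
  specialize (H n ltac:(lia)). specialize (HN n ltac:(lia)). lra.
Qed.

Lemma tozero_shift (e : nat -> R) k : tozero e -> tozero (fun n => e (n + k)%nat).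
Proof.
  intros He eps Heps. destruct (He eps Heps) as [N HN]. exists N. intros n Hn. apply HN. lia.
Qed.

Lemma conv_unique (s : nat -> C) l1 l2 : conv s l1 -> conv s l2 -> l1 = l2.
Proof.
  intros H1 H2. cut (l1 - l2 = 0). intro E. replace l1 with (l1 - l2 + l2) by ring. rewrite E. ring.
  apply Cmod_eq_0. destruct (Rle_lt_or_eq_dec 0 (Cmod (l1 - l2))). apply Cmod_ge_0.
  2: auto. exfalso. set (e := Cmod (l1 - l2)) in *.
  destruct (H1 (e/2)%R) as [N1 HN1]. lra. destruct (H2 (e/2)%R) as [N2 HN2]. lra.
  specialize (HN1 (max N1 N2) ltac:(lia)). specialize (HN2 (max N1 N2) ltac:(lia)).
  assert (Cmod (l1 - l2) <= Cmod (s (max N1 N2) - l2) + Cmod (s (max N1 N2) - l1))%R.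
  { replace (l1 - l2) with ((s (max N1 N2) - l2) - (s (max N1 N2) - l1)) by ring. apply Cmod_sub_le. }
  fold e in H. lra.
Qed.

Lemma conv_lin (s t : nat -> C) (a b l m : C) : conv s l -> conv t m ->
  conv (fun n => a * s n + b * t n) (a * l + b * m).
Proof.
  intros Hs Ht eps Heps.
  set (K := (Cmod a + Cmod b + 1)%R).
  assert (0 <= Cmod a)%R by apply Cmod_ge_0. assert (0 <= Cmod b)%R by apply Cmod_ge_0.
  assert (HK : (0 < K)%R) by (unfold K; lra).
  destruct (Hs (eps / K)%R) as [N1 H1]. apply Rdiv_lt_0_compat; lra.
  destruct (Ht (eps / K)%R) as [N2 H2]. apply Rdiv_lt_0_compat; lra.
  exists (max N1 N2). intros n Hn. specialize (H1 n ltac:(lia)). specialize (H2 n ltac:(lia)).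
  replace (a * s n + b * t n - (a * l + b * m)) with (a * (s n - l) + b * (t n - m)) by ring.
  eapply Rle_lt_trans. apply Cmod_triangle. rewrite !Cmod_mult.
  assert (0 <= Cmod (s n - l))%R by apply Cmod_ge_0. assert (0 <= Cmod (t n - m))%R by apply Cmod_ge_0.
  assert (Cmod a * Cmod (s n - l) <= Cmod a * (eps / K))%R by (apply Rmult_le_compat_l; lra).
  assert (Cmod b * Cmod (t n - m) <= Cmod b * (eps / K))%R by (apply Rmult_le_compat_l; lra).
  assert ((Cmod a + Cmod b) * (eps / K) < eps)%R.
  { unfold Rdiv. replace eps with (K * (eps * / K))%R at 2 by (field; lra).
    apply Rmult_lt_compat_r. apply Rmult_lt_0_compat; [lra| apply Rinv_0_lt_compat; lra]. unfold K; lra. }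
  lra.
Qed.

Lemma conv_ext (s t : nat -> C) l N0 : (forall n, (n >= N0)%nat -> s n = t n) -> conv s l -> conv t l.
Proof.
  intros H Hs eps Heps. destruct (Hs eps Heps) as [N HN]. exists (max N N0). intros n Hn.
  rewrite <- H by lia. apply HN. lia.
Qed.

Lemma conv_const (l : C) : conv (fun _ => l) l.
Proof. intros eps Heps. exists 0%nat. intros. replace (l - l) with (RtoC 0) by ring. rewrite Cmod_0. lra. Qed.

Lemma conv_bound (s : nat -> C) l a (B : R) N0 : conv s l ->
  (forall n, (n >= N0)%nat -> Cmod (s n - a) <= B)%R -> (Cmod (l - a) <= B)%R.
Proof.
  intros Hs H. apply Rnot_lt_le. intro Hlt. set (e := (Cmod (l - a) - B)%R).
  destruct (Hs e) as [N HN]. unfold e; lra.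
  specialize (HN (max N N0) ltac:(lia)). specialize (H (max N N0) ltac:(lia)).
  assert (Cmod (l - a) <= Cmod (s (max N N0) - a) + Cmod (s (max N N0) - l))%R.
  { replace (l - a) with ((s (max N N0) - a) - (s (max N N0) - l)) by ring. apply Cmod_sub_le. }
  unfold e in HN. lra.
Qed.

Lemma conv_sub (s : nat -> C) l (phi : nat -> nat) : (forall k, (phi k >= k)%nat) -> conv s l ->
  conv (fun k => s (phi k)) l.
Proof.
  intros Hp Hs eps Heps. destruct (Hs eps Heps) as [N HN]. exists N. intros n Hn. apply HN.
  specialize (Hp n). lia.
Qed.

Lemma conv_tozero (s : nat -> C) (l : C) : conv s l -> tozero (fun n => Cmod (s n - l)).
Proof. intros H eps He. destruct (H eps He) as [N HN]. exists N. auto. Qed.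

Lemma Cmod_csum_le (f : nat -> C) n : (Cmod (csum f n) <= rsum (fun k => Cmod (f k)) n)%R.
Proof.
  induction n; simpl. rewrite Cmod_0. lra. eapply Rle_trans. apply Cmod_triangle. lra.
Qed.

Lemma csum_ext (f g : nat -> C) n : (forall k, (k < n)%nat -> f k = g k) -> csum f n = csum g n.
Proof. induction n; simpl; intros; auto. rewrite IHn by (intros; apply H; lia). rewrite H by lia. auto. Qed.

Lemma rsum_le (f g : nat -> R) n : (forall k, (k < n)%nat -> f k <= g k)%R -> (rsum f n <= rsum g n)%R.
Proof. induction n; simpl; intros. lra. assert (H1 := H n ltac:(lia)). assert (rsum f n <= rsum g n)%R by (apply IHn; intros; apply H; lia). lra. Qed.

Lemma rsum_scal (f : nat -> R) c n : (rsum (fun k => c * f k) n = c * rsum f n)%R.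
Proof. induction n; simpl. ring. rewrite IHn. ring. Qed.

Lemma csum_scal (f : nat -> C) c n : csum (fun k => c * f k) n = c * csum f n.
Proof. induction n; simpl. ring. rewrite IHn. ring. Qed.

Lemma csum_add (f g : nat -> C) n : csum (fun k => f k + g k) n = csum f n + csum g n.
Proof. induction n; simpl. ring. rewrite IHn. ring. Qed.

Lemma csum_split (f : nat -> C) m k : csum f (m + k) = csum f m + csum (fun i => f (m + i)%nat) k.
Proof. induction k; simpl. rewrite Nat.add_0_r. ring. rewrite Nat.add_succ_r. simpl. rewrite IHk. ring. Qed.

Lemma csum_telescope (w : nat -> C) n : csum (fun k => w k - w (S k)) n = w 0%nat - w n.
Proof. induction n; simpl. ring. rewrite IHn. ring. Qed.

Lemma rsum_split (f : nat -> R) m k : (rsum f (m + k) = rsum f m + rsum (fun i => f (m + i)%nat) k)%R.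
Proof. induction k; simpl. rewrite Nat.add_0_r. ring. rewrite Nat.add_succ_r. simpl. rewrite IHk. ring. Qed.

Lemma sum_f_R0_rsum (g : nat -> R) n : sum_f_R0 g n = rsum g (S n).
Proof. induction n; simpl. ring. rewrite IHn. simpl. ring. Qed.

Lemma Uncv_cauchy (g : nat -> R) (M : R) : Un_cv (sum_f_R0 g) M ->
  forall eps, (eps > 0)%R -> exists J, forall m n, (J <= m)%nat -> (m <= n)%nat ->
    (rsum g n - rsum g m < eps)%R.
Proof.
  intros H eps He. destruct (H (eps/2)%R) as [N HN]. lra.
  exists (S N). intros m n Hm Hn.
  destruct m. lia. destruct n. lia.
  assert (A := HN m ltac:(lia)). assert (B := HN n ltac:(lia)).
  rewrite sum_f_R0_rsum in A, B. unfold R_dist in A, B.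
  apply Rabs_def2 in A. apply Rabs_def2 in B. lra.
Qed.

Lemma conv_lemma (b : nat -> R) (r : R) :
  (forall k, 0 <= b k)%R -> (0 <= r < 1)%R ->
  (forall eps, (eps > 0)%R -> exists J, forall m n, (J <= m)%nat -> (m <= n)%nat ->
    (rsum b n - rsum b m < eps)%R) ->
  tozero (fun N => rsum (fun j => b j * r ^ (N - j)) N)%R.
Proof.
  intros Hb Hr HC eps He. destruct (HC (eps/2)%R) as [J HJ]. lra.
  set (SJ := rsum b J).
  assert (HSJ : (0 <= SJ)%R) by (apply rsum_nonneg; auto).
  destruct (tozero_scal _ SJ HSJ (tozero_geom r Hr) (eps/2)%R) as [N1 HN1]. lra.
  exists (J + N1)%nat. intros N HN.
  replace N with (J + (N - J))%nat by lia. rewrite rsum_split.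
  assert (P1 : (rsum (fun j => b j * r ^ (J + (N - J) - j)) J <= SJ * r ^ (N - J))%R).
  { unfold SJ. rewrite Rmult_comm, <- rsum_scal. apply rsum_le. intros k Hk.
    replace (J + (N - J) - k)%nat with ((N - J) + (J - k))%nat by lia. rewrite pow_add.
    assert (0 <= r ^ (N - J))%R by (apply pow_le; lra).
    assert (r ^ (J - k) <= 1)%R by (apply pow_le_1; lra). specialize (Hb k). assert (0 <= b k * r ^ (N - J))%R by (apply Rmult_le_pos; lra). nra. }
  assert (P2 : (rsum (fun i => b (J + i)%nat * r ^ (J + (N - J) - (J + i))) (N - J) <=
               rsum (fun i => b (J + i)%nat) (N - J))%R).
  { apply rsum_le. intros k Hk. assert (r ^ (J + (N - J) - (J + k)) <= 1)%R by (apply pow_le_1; lra).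
    assert (0 <= r ^ (J + (N - J) - (J + k)))%R by (apply pow_le; lra). specialize (Hb (J+k)%nat). nra. }
  assert (P3 : (rsum (fun i => b (J + i)%nat) (N - J) < eps / 2)%R).
  { assert (H := HJ J (J + (N - J))%nat ltac:(lia) ltac:(lia)). rewrite rsum_split in H. lra. }
  assert (P4 := HN1 (N - J)%nat ltac:(lia)). simpl in P4. lra.
Qed.

Lemma qp_fac_ne0 (c q : C) n : (forall m, qp c q m <> 0) -> 1 - c * q ^ n <> 0.
Proof. intros H E. apply (H (S n)). simpl. rewrite E. ring. Qed.

Lemma UB_mono (w w' q : C) : (Cmod q < 1)%R -> (Cmod w <= Cmod w')%R -> (UB w q <= UB w' q)%R.
Proof.
  intros Hq H. unfold UB. apply exp_mono. unfold Rdiv. apply Rmult_le_compat_r; auto.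
  left. apply Rinv_0_lt_compat. lra.
Qed.

Lemma Cmod_mul_pow_le (w q : C) j : (Cmod q < 1)%R -> (Cmod (w * q ^ j) <= Cmod w)%R.
Proof.
  intros Hq. rewrite Cmod_mult. assert (H := Cmod_pow_lt1 q j Hq).
  assert (0 <= Cmod w)%R by apply Cmod_ge_0. assert (0 <= Cmod (q^j))%R by apply Cmod_ge_0. nra.
Qed.

Lemma Cmod_div_le (a b : C) (A d : R) : b <> 0 -> (Cmod a <= A)%R -> (0 < d)%R -> (d <= Cmod b)%R ->
  (Cmod (a / b) <= A / d)%R.
Proof.
  intros Hb Ha Hd Hdb. rewrite Cmod_div by auto. unfold Rdiv.
  apply Rmult_le_compat; auto. apply Cmod_ge_0. left. apply Rinv_0_lt_compat. lra.
  apply Rinv_le_contravar; auto.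
Qed.

Section ML.
Variables Q Z X : C.
Hypothesis hQ : (Cmod Q < 1)%R.
Hypothesis hX : (Cmod X < 1)%R.
Hypothesis hP : forall m, qp (X * Z) Q m <> 0.
Hypothesis hXn : forall m, qp X Q m <> 0.

Definition T (j n : nat) : C :=
  qp Z Q n * qp Q Q (n - 1) * X ^ n / (qp Q Q (n - j) * qp (X * Z) Q (n + j)).
Definition cc (j : nat) : C :=
  qp Z Q j * qp Q Q (j - 1) * X ^ j / (qp (X * Z) Q j * qp X Q j).
Definition dd (j : nat) : C := qp Z Q j * qp Q Q (j - 1) * X ^ j.
Definition Sj (j N : nat) : C := csum (fun k => T j (j + k)) N.

Lemma hQn : forall m, qp Q Q m <> 0.
Proof. intros. apply qp_qq_ne0; auto. Qed.

Lemma bound_T : exists K, (0 <= K)%R /\ forall j k,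
  (Cmod (T j (j + k)) <= K * Cmod (dd j) * Cmod X ^ k)%R.
Proof.
  destruct (qp_lower Q Q hQ hQn) as [dQ [HdQ HQl]].
  destruct (qp_lower (X * Z) Q hQ hP) as [dP [HdP HPl]].
  exists (UB Z Q * UB Q Q / (dQ * dP))%R. split.
  { apply Rlt_le. apply Rdiv_lt_0_compat. apply Rmult_lt_0_compat; apply UB_pos. apply Rmult_lt_0_compat; auto. }
  intros j k. unfold T, dd.
  replace (j + k - j)%nat with k by lia.
  assert (HZ : Cmod (qp Z Q (j + k)) <= Cmod (qp Z Q j) * UB Z Q).
  { rewrite qp_add, Cmod_mult. apply Rmult_le_compat_l. apply Cmod_ge_0.
    eapply Rle_trans. apply qp_upper; auto. apply UB_mono; auto. apply Cmod_mul_pow_le; auto. }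
  assert (HQ : Cmod (qp Q Q (j + k - 1)) <= Cmod (qp Q Q (j - 1)) * UB Q Q).
  { destruct j. simpl. rewrite Cmod_1, Rmult_1_l. apply qp_upper; auto.
    replace (S j + k - 1)%nat with (j + k)%nat by lia. replace (S j - 1)%nat with j by lia.
    rewrite qp_add, Cmod_mult. apply Rmult_le_compat_l. apply Cmod_ge_0.
    eapply Rle_trans. apply qp_upper; auto. apply UB_mono; auto. apply Cmod_mul_pow_le; auto. }
  rewrite Cpow_add_r.
  set (num := qp Z Q (j + k) * qp Q Q (j + k - 1) * (X ^ j * X ^ k)).
  set (den := qp Q Q k * qp (X * Z) Q (j + k + j)).
  assert (Hden : den <> 0) by (apply Cmult_neq_0; [apply hQn|apply hP]).
  assert (Hdl : (dQ * dP <= Cmod den)%R).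
  { unfold den. rewrite Cmod_mult. apply Rmult_le_compat; try lra; auto. }
  eapply Rle_trans. apply Cmod_div_le with (d := (dQ * dP)%R) (A := (Cmod (qp Z Q j) * UB Z Q * (Cmod (qp Q Q (j - 1)) * UB Q Q) * (Cmod X ^ j * Cmod X ^ k))%R); auto.
  { unfold num. rewrite !Cmod_mult, !Cmod_pow. apply Rmult_le_compat. 
    apply Rmult_le_pos; apply Cmod_ge_0. apply Rmult_le_pos; apply pow_le, Cmod_ge_0.
    apply Rmult_le_compat; auto; apply Cmod_ge_0. lra. }
  apply Rmult_lt_0_compat; auto.
  rewrite !Cmod_mult, !Cmod_pow. apply Req_le. field. lra.
Qed.

Lemma hPf : forall n, 1 - X * Z * Q ^ n <> 0.
Proof. intros. apply qp_fac_ne0; auto. Qed.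
Lemma hXf : forall n, 1 - X * Q ^ n <> 0.
Proof. intros. apply qp_fac_ne0; auto. Qed.
Lemma hX1 : 1 - X <> 0.
Proof. apply one_sub_ne0; auto. Qed.
Lemma hQf : forall n, 1 - Q ^ S n <> 0.
Proof. intros. apply one_sub_powS_ne0; auto. Qed.

Definition w1 (n : nat) : C := qp Z Q n * X ^ n / ((1 - X) * qp (X * Z) Q n).

Lemma T1_step k : T 1 (1 + k) = w1 (1 + k) - w1 (2 + k).
Proof.
  unfold T, w1. replace (1 + k - 1)%nat with k by lia. replace (1 + k + 1)%nat with (S (S k)) by lia.
  replace (2 + k)%nat with (S (S k)) by lia. replace (1 + k)%nat with (S k) by lia.
  rewrite !(qp_S _ Q (S k)). rewrite (Cpow_S X (S k)).
  assert (H1 := hPf (S k)). assert (H2 := hP (S k)). assert (H3 := hQn k). assert (H4 := hX1).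
  field. repeat split; auto.
Qed.

Lemma Sj1 N : Sj 1 N = cc 1 - w1 (S N).
Proof.
  unfold Sj. rewrite (csum_ext _ (fun k => w1 (1 + k) - w1 (S (1 + k)))).
  rewrite (csum_telescope (fun k => w1 (1 + k))). f_equal.
  unfold w1, cc. simpl. assert (H4 := hX1). assert (H1 := hPf 0).
  simpl in H1. field. split; auto. intro E. apply H1. rewrite <- E. ring.
  intros k _. apply T1_step.
Qed.

Definition rho (j : nat) : C :=
  (1 - Z * Q ^ j) * (1 - Q ^ j) * X / ((1 - X * Z * Q ^ j) * (1 - X * Q ^ j)).
Definition lam (j : nat) : C := (1 - rho j) / (1 - X).
Definition Wt (j k : nat) : C := lam j * T j (j + k) * (1 - Q ^ k).

Lemma T_ratio j k : T (S j) (S j + k) = T j (j + S k) * (1 - Q ^ (S k)) / (1 - X * Z * Q ^ (j + S k + j)).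
Proof.
  unfold T. replace (S j + k)%nat with (j + S k)%nat by lia.
  replace (j + S k - S j)%nat with k by lia. replace (j + S k - j)%nat with (S k) by lia.
  replace (j + S k + S j)%nat with (S (j + S k + j)) by lia.
  rewrite (qp_S _ Q (j + S k + j)), (qp_S Q Q k).
  replace (Q * Q ^ k) with (Q ^ S k) by reflexivity.
  assert (H1 := hPf (j + S k + j)). assert (H2 := hP (j + S k + j)). assert (H3 := hQn k).
  assert (H4 := hQf k).
  field. repeat split; auto.
Qed.

Lemma T_next j k : (j >= 1)%nat ->
  T j (j + S k) = T j (j + k) * ((1 - Z * Q ^ (j + k)) * (1 - Q ^ (j + k)) * X) /
                   ((1 - Q ^ (S k)) * (1 - X * Z * Q ^ (j + k + j))).
Proof.
  intros Hj. destruct j as [|j']. lia. unfold T.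
  replace (S j' + S k)%nat with (S (S j' + k)) by lia.
  replace (S (S j' + k) - S j')%nat with (S k) by lia.
  replace (S j' + k - S j')%nat with k by lia.
  replace (S (S j' + k) - 1)%nat with (S j' + k)%nat by lia.
  replace (S j' + k - 1)%nat with (j' + k)%nat by lia.
  replace (S (S j' + k) + S j')%nat with (S (S j' + k + S j')) by lia.
  rewrite (qp_S Z Q (S j' + k)), (qp_S _ Q (S j' + k + S j')), (qp_S Q Q k).
  change (qp Q Q (S j' + k)) with (qp Q Q (S (j' + k))). rewrite (qp_S Q Q (j' + k)).
  rewrite (Cpow_S X (S j' + k)).
  replace (Q * Q ^ k) with (Q ^ S k) by reflexivity.
  replace (Q * Q ^ (j' + k)) with (Q ^ (S j' + k)) by reflexivity.
  assert (H1 := hPf (S j' + k + S j')). assert (H2 := hP (S j' + k + S j')). assert (H3 := hQn k).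
  assert (H4 := hQf k). assert (H5 := hQn (j' + k)).
  field. repeat split; auto.
Qed.

Lemma tele j k : (j >= 1)%nat ->
  T j (j + k) * ((1 - Q ^ k) / (1 - X * Z * Q ^ (j + k + j)) - rho j) = Wt j k - Wt j (S k).
Proof.
  intros Hj. unfold Wt. rewrite (T_next j k Hj). unfold lam, rho.
  replace (j + k + j)%nat with (j + j + k)%nat by lia.
  rewrite !Cpow_add_r. rewrite (Cpow_S Q k).
  assert (H1 := hPf (j + j + k)). rewrite !Cpow_add_r in H1.
  assert (H4 := hQf k). rewrite Cpow_S in H4.
  assert (H5 := hPf j). assert (H6 := hXf j). assert (H7 := hX1).
  field. repeat split; auto.
Qed.

Lemma csum_shift (f : nat -> C) N : csum f (S N) = f 0%nat + csum (fun k => f (S k)) N.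
Proof. induction N. simpl. ring.
  change (csum f (S (S N))) with (csum f (S N) + f (S N)). rewrite IHN.
  change (csum (fun k => f (S k)) (S N)) with (csum (fun k => f (S k)) N + f (S N)). ring. Qed.

Lemma Sj_step j N : (j >= 1)%nat -> Sj (S j) N = rho j * Sj j (S N) - Wt j (S N).
Proof.
  intros Hj. unfold Sj.
  assert (E : csum (fun k => T (S j) (S j + k)) N =
              csum (fun k => T j (j + k) * ((1 - Q ^ k) / (1 - X * Z * Q ^ (j + k + j)))) (S N)).
  { rewrite csum_shift. replace (1 - Q ^ 0) with (RtoC 0) by (simpl; ring).
    rewrite (csum_ext (fun k => T j (j + S k) * ((1 - Q ^ S k) / (1 - X * Z * Q ^ (j + S k + j))))
                      (fun k => T (S j) (S j + k))).
    unfold Cdiv. ring.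
    intros k _. rewrite T_ratio. unfold Cdiv. ring. }
  rewrite E.
  assert (E2 : forall k, T j (j + k) * ((1 - Q ^ k) / (1 - X * Z * Q ^ (j + k + j))) =
       (Wt j k - Wt j (S k)) + rho j * T j (j + k)).
  { intros k. rewrite <- tele by auto. ring. }
  rewrite (csum_ext _ _ _ (fun k _ => E2 k)). rewrite csum_add, csum_telescope, csum_scal.
  unfold Wt. replace (1 - Q ^ 0) with (RtoC 0) by (simpl; ring). ring.
Qed.

Lemma cc_step j : (j >= 1)%nat -> cc (S j) = rho j * cc j.
Proof.
  intros Hj. destruct j as [|j']. lia. unfold cc, rho.
  replace (S (S j') - 1)%nat with (S j') by lia. replace (S j' - 1)%nat with j' by lia.
  rewrite (qp_S Z Q (S j')), (qp_S _ Q (S j')), (qp_S X Q (S j')), (qp_S Q Q j'), (Cpow_S X (S j')).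
  replace (Q * Q ^ j') with (Q ^ S j') by reflexivity.
  assert (H1 := hPf (S j')). assert (H2 := hP (S j')). assert (H3 := hXn (S j')). assert (H4 := hXf (S j')).
  field. repeat split; auto.
Qed.

Lemma conv_geom_bound (s : nat -> C) (l : C) (K r : R) :
  (0 <= K)%R -> (0 <= r < 1)%R -> (forall n, Cmod (s n - l) <= K * r ^ n)%R -> conv s l.
Proof.
  intros HK Hr H. apply (conv_by _ _ (fun n => K * r ^ n)%R 0). intros; auto.
  apply tozero_scal; auto. apply tozero_geom; auto.
Qed.

Lemma rX : (0 <= Cmod X < 1)%R.
Proof. split; auto. apply Cmod_ge_0. Qed.

Lemma Wt_conv j : conv (fun N => Wt j N) 0.
Proof.
  destruct bound_T as [K [HK HT]].
  apply (conv_geom_bound _ _ (Cmod (lam j) * (K * Cmod (dd j)) * 2) (Cmod X)); auto.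
  repeat apply Rmult_le_pos; try lra; try apply Cmod_ge_0. apply rX.
  intros n. unfold Wt. replace (lam j * T j (j + n) * (1 - Q ^ n) - 0) with (lam j * T j (j + n) * (1 - Q ^ n)) by ring.
  rewrite !Cmod_mult. specialize (HT j n).
  assert (H1 : (Cmod (1 - Q ^ n) <= 2)%R).
  { eapply Rle_trans. apply Cmod_sub_le. rewrite Cmod_1. assert (H := Cmod_pow_lt1 Q n hQ). lra. }
  assert (0 <= Cmod (lam j))%R by apply Cmod_ge_0. assert (0 <= Cmod (T j (j + n)))%R by apply Cmod_ge_0.
  assert (0 <= Cmod (1 - Q ^ n))%R by apply Cmod_ge_0.
  assert (Cmod (T j (j + n)) * Cmod (1 - Q ^ n) <= K * Cmod (dd j) * Cmod X ^ n * 2)%R.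
  { apply Rmult_le_compat; auto. }
  replace (Cmod (lam j) * (K * Cmod (dd j)) * 2 * Cmod X ^ n)%R with
     (Cmod (lam j) * (K * Cmod (dd j) * Cmod X ^ n * 2))%R by ring.
  rewrite Rmult_assoc. apply Rmult_le_compat_l; auto.
Qed.

Lemma Sj_conv j : (j >= 1)%nat -> conv (Sj j) (cc j).
Proof.
  induction j as [|j IH]. lia. intros _. destruct j as [|j].
  -
    destruct (qp_lower (X * Z) Q hQ hP) as [dP [HdP HPl]].
    assert (Hx1 : (0 < Cmod (1 - X))%R) by (apply Cmod_pos_of_ne; apply hX1).
    apply (conv_geom_bound _ _ (UB Z Q * Cmod X / (Cmod (1 - X) * dP)) (Cmod X)).
    apply Rmult_le_pos. apply Rmult_le_pos. left; apply UB_pos. apply Cmod_ge_0.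
    left. apply Rinv_0_lt_compat. apply Rmult_lt_0_compat; auto. apply rX.
    intros n. rewrite Sj1. replace (cc 1 - w1 (S n) - cc 1) with (- w1 (S n)) by ring.
    rewrite Cmod_opp. unfold w1.
    eapply Rle_trans. apply Cmod_div_le with (d := (Cmod (1 - X) * dP)%R) (A := (UB Z Q * Cmod X ^ S n)%R).
    apply Cmult_neq_0. apply hX1. apply hP.
    rewrite Cmod_mult, Cmod_pow. apply Rmult_le_compat_r. apply pow_le, Cmod_ge_0. apply qp_upper; auto.
    apply Rmult_lt_0_compat; auto. rewrite Cmod_mult. apply Rmult_le_compat_l; auto. lra.
    apply Req_le. simpl. field. lra.
  - assert (IH' := IH ltac:(lia)).
    assert (H1 : conv (fun N => Sj (S j) (S N)) (cc (S j))).
    { apply (conv_sub _ _ S); auto. }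
    assert (H3 : conv (fun N => Wt (S j) (S N)) 0). { apply (conv_sub _ _ S); auto. apply Wt_conv. }
    assert (H2 := conv_lin _ _ (rho (S j)) (-1) _ _ H1 H3).
    replace (cc (S (S j))) with (rho (S j) * cc (S j) + -1 * 0) by (rewrite (cc_step (S j)) by lia; ring).
    eapply (conv_ext _ _ _ 0%nat); [| exact H2]. intros n _. simpl. rewrite (Sj_step (S j)) by lia. ring.
Qed.

Lemma tail_bound : exists K, (0 <= K)%R /\ forall j M, (j >= 1)%nat ->
  (Cmod (cc j - Sj j M) <= K * Cmod (dd j) * Cmod X ^ M / (1 - Cmod X))%R.
Proof.
  destruct bound_T as [K [HK HT]]. exists K. split; auto. intros j M Hj.
  replace (cc j - Sj j M) with (-(Sj j M - cc j)) by ring. rewrite Cmod_opp.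
  rewrite <- Cmod_opp. replace (- (Sj j M - cc j)) with (cc j - Sj j M) by ring.
  apply (conv_bound (Sj j) (cc j) (Sj j M) _ M (Sj_conv j Hj)).
  intros n Hn. replace n with (M + (n - M))%nat by lia. unfold Sj. rewrite csum_split.
  replace (csum (fun k => T j (j + k)) M + csum (fun i => T j (j + (M + i))) (n - M) -
     csum (fun k => T j (j + k)) M) with (csum (fun i => T j (j + (M + i))) (n - M)) by ring.
  eapply Rle_trans. apply Cmod_csum_le.
  eapply Rle_trans. apply rsum_le with (g := fun i => (K * Cmod (dd j) * Cmod X ^ M * Cmod X ^ i)%R).
  intros i _. replace (K * Cmod (dd j) * Cmod X ^ M * Cmod X ^ i)%R with (K * Cmod (dd j) * Cmod X ^ (M + i))%R by (rewrite pow_add; ring). apply HT.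
  rewrite rsum_scal. unfold Rdiv. apply Rmult_le_compat_l.
  repeat apply Rmult_le_pos; auto; try apply Cmod_ge_0. apply pow_le, Cmod_ge_0.
  apply rsum_geom_le. apply rX.
Qed.
End ML.

Lemma double_sum (a : nat -> nat -> C) N :
  csum (fun n => csum (fun j => a n j) (S n)) N =
  csum (fun j => csum (fun k => a (j + k)%nat j) (N - j)) N.
Proof.
  induction N. reflexivity.
  change (csum (fun n => csum (fun j => a n j) (S n)) (S N)) with
    (csum (fun n => csum (fun j => a n j) (S n)) N + csum (fun j => a N j) (S N)).
  rewrite IHN.
  change (csum (fun j => csum (fun k => a (j + k)%nat j) (S N - j)) (S N)) with
    (csum (fun j => csum (fun k => a (j + k)%nat j) (S N - j)) N +
     csum (fun k => a (N + k)%nat N) (S N - N)).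
  replace (S N - N)%nat with 1%nat by lia.
  rewrite (csum_ext (fun j => csum (fun k => a (j + k)%nat j) (S N - j))
                    (fun j => csum (fun k => a (j + k)%nat j) (N - j) + a N j)).
  rewrite csum_add. change (csum (fun j => a N j) (S N)) with (csum (fun j => a N j) N + a N N).
  change (csum (fun k => a (N + k)%nat N) 1) with (0 + a (N + 0)%nat N). rewrite Nat.add_0_r.
  change (csum (a N) N) with (csum (fun j => a N j) N). ring.
  intros j Hj. replace (S N - j)%nat with (S (N - j)) by lia. simpl. f_equal. f_equal. lia.
Qed.

Lemma Cdiff_eq0 (x y : C) : x - y = 0 -> x = y.
Proof. intros H. replace x with (x - y + y) by ring. rewrite H. ring. Qed.

Section MLmain.
Variables Q Z X : C.
Hypothesis hQ : (Cmod Q < 1)%R.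
Hypothesis hX : (Cmod X < 1)%R.
Hypothesis hP : forall m, qp (X * Z) Q m <> 0.
Hypothesis hXn : forall m, qp X Q m <> 0.
Variables (alpha beta : nat -> C) (lA lB MA : C) (MR : R).
Hypothesis ha0 : alpha 0%nat = 1.
Hypothesis hB : forall n, beta n = csum (fun j => alpha j / (qp Q Q (n - j) * qp (X * Z) Q (n + j))) (S n).

Definition tB (n : nat) : C := qp Z Q n * qp Q Q (n - 1) * X ^ n * beta n.
Definition tA (n : nat) : C := qp Z Q n * qp Q Q (n - 1) / (qp (X * Z) Q n * qp X Q n) * X ^ n * alpha n.

Hypothesis habs : Un_cv (sum_f_R0 (fun k => Cmod (tA (S k)))) MR.
Hypothesis hBc : conv1 tB lB.
Hypothesis hAc : conv1 tA lA.

Lemma tB_expand n : tB n = csum (fun j => alpha j * T Q Z X j n) (S n).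
Proof.
  unfold tB. rewrite hB. rewrite <- csum_scal. apply csum_ext. intros j Hj.
  unfold T. assert (H1 := hQn Q hQ (n - j)). assert (H2 := hP (n + j)). field. split; auto.
Qed.

Lemma id1 N : csum tB (S N) = csum (fun j => alpha j * Sj Q Z X j (S N - j)) (S N).
Proof.
  rewrite (csum_ext tB (fun n => csum (fun j => alpha j * T Q Z X j n) (S n))) by (intros; apply tB_expand).
  rewrite double_sum. apply csum_ext. intros j _. unfold Sj. rewrite csum_scal. reflexivity.
Qed.

Lemma tB0 : tB 0%nat = 1.
Proof. unfold tB. rewrite hB. simpl. rewrite ha0. field. Qed.

Lemma T00 : T Q Z X 0 0 = 1.
Proof. unfold T. simpl. field. Qed.

Definition EE (N : nat) : C := csum (fun j => alpha (S j) * (cc Q Z X (S j) - Sj Q Z X (S j) (N - j))) N.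

Lemma id2 N : csum (fun k => T Q Z X 0 (S k)) N =
  csum (fun k => tB (S k)) N - csum (fun k => tA (S k)) N + EE N.
Proof.
  assert (H := id1 N). rewrite !csum_shift in H. rewrite tB0, ha0 in H.
  replace (S N - 0)%nat with (S N) in H by lia.
  unfold Sj at 1 in H. rewrite csum_shift in H. rewrite Nat.add_0_r, T00 in H.
  simpl (S N - S _)%nat in H.
  unfold EE.
  assert (E : forall j, alpha (S j) * Sj Q Z X (S j) (N - j) =
            tA (S j) - alpha (S j) * (cc Q Z X (S j) - Sj Q Z X (S j) (N - j))).
  { intros j. unfold tA, cc. unfold Cdiv. ring. }
  rewrite (csum_ext _ _ _ (fun j _ => E j)) in H.
  rewrite (csum_ext (fun j => tA (S j) - alpha (S j) * (cc Q Z X (S j) - Sj Q Z X (S j) (N - j)))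
     (fun j => tA (S j) + (-1) * (alpha (S j) * (cc Q Z X (S j) - Sj Q Z X (S j) (N - j))))) in H
     by (intros; ring).
  rewrite csum_add, csum_scal in H.
  unfold Sj in H. simpl (0 + _)%nat in H.
  unfold Sj. apply Cdiff_eq0.
  match type of H with ?l = ?r => transitivity (r - l); [ring | rewrite H; ring] end.
Qed.

Lemma EE_bound : exists C, (0 <= C)%R /\ forall N,
  (Cmod (EE N) <= C * rsum (fun j => Cmod (tA (S j)) * Cmod X ^ (N - j)) N)%R.
Proof.
  destruct (tail_bound Q Z X hQ hX hP hXn) as [Kt [HKt Ht]].
  assert (H1X : (0 < 1 - Cmod X)%R) by lra.
  set (C := (Kt * UB (X * Z) Q * UB X Q / (1 - Cmod X))%R).
  assert (HC : (0 <= C)%R).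
  { unfold C. apply Rmult_le_pos. repeat apply Rmult_le_pos; auto; left; apply UB_pos.
    left; apply Rinv_0_lt_compat; auto. }
  exists C. split; auto. intros N. unfold EE.
  eapply Rle_trans. apply Cmod_csum_le. rewrite <- rsum_scal. apply rsum_le. intros j Hj.
  rewrite Cmod_mult. specialize (Ht (S j) (N - j)%nat ltac:(lia)).
  assert (Hd : (Cmod (alpha (S j)) * Cmod (dd Q Z X (S j)) <= Cmod (tA (S j)) * (UB (X * Z) Q * UB X Q))%R).
  { assert (E : dd Q Z X (S j) * alpha (S j) = tA (S j) * (qp (X * Z) Q (S j) * qp X Q (S j))).
    { unfold dd, tA. field. split; auto. }
    rewrite Rmult_comm, <- Cmod_mult, E, Cmod_mult. apply Rmult_le_compat_l. apply Cmod_ge_0.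
    rewrite Cmod_mult. apply Rmult_le_compat; try apply Cmod_ge_0; apply qp_upper; auto. }
  assert (0 <= Cmod (alpha (S j)))%R by apply Cmod_ge_0.
  assert (0 <= Cmod X ^ (N - j))%R by (apply pow_le, Cmod_ge_0).
  apply Rle_trans with (Cmod (alpha (S j)) * (Kt * Cmod (dd Q Z X (S j)) * Cmod X ^ (N - j) / (1 - Cmod X)))%R.
  apply Rmult_le_compat_l; auto.
  unfold C. unfold Rdiv.
  replace (Cmod (alpha (S j)) * (Kt * Cmod (dd Q Z X (S j)) * Cmod X ^ (N - j) * / (1 - Cmod X)))%R
    with ((Cmod (alpha (S j)) * Cmod (dd Q Z X (S j))) * (Kt * Cmod X ^ (N - j) * / (1 - Cmod X)))%R by ring.
  replace (Kt * UB (X * Z) Q * UB X Q * / (1 - Cmod X) * (Cmod (tA (S j)) * Cmod X ^ (N - j)))%R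
    with ((Cmod (tA (S j)) * (UB (X * Z) Q * UB X Q)) * (Kt * Cmod X ^ (N - j) * / (1 - Cmod X)))%R by ring.
  apply Rmult_le_compat_r; auto.
  apply Rmult_le_pos. apply Rmult_le_pos; auto. left; apply Rinv_0_lt_compat; auto.
Qed.

Theorem ML_main : conv1 (T Q Z X 0) (lB - lA).
Proof.
  destruct EE_bound as [C [HC HE]].
  unfold conv1.
  apply (conv_by _ _ (fun N => Cmod (csum (fun k => tB (S k)) N - lB) + Cmod (csum (fun k => tA (S k)) N - lA)
      + C * rsum (fun j => Cmod (tA (S j)) * Cmod X ^ (N - j)) N)%R 0).
  - intros N _. rewrite id2.
    replace (csum (fun k => tB (S k)) N - csum (fun k => tA (S k)) N + EE N - (lB - lA)) with
      ((csum (fun k => tB (S k)) N - lB) - (csum (fun k => tA (S k)) N - lA) + EE N) by ring.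
    eapply Rle_trans. apply Cmod_triangle. specialize (HE N).
    assert (H := Cmod_sub_le (csum (fun k => tB (S k)) N - lB) (csum (fun k => tA (S k)) N - lA)). lra.
  - apply tozero_add. apply tozero_add. apply conv_tozero; auto. apply conv_tozero; auto.
    apply tozero_scal; auto. apply conv_lemma. intros; apply Cmod_ge_0. split; [apply Cmod_ge_0 | auto].
    apply (Uncv_cauchy _ _ habs).
Qed.
End MLmain.

Definition h (b q x : C) (n : nat) : C :=
  qp (b * q / x) q n * qp q q (n - 1) * x ^ n / (qp q q n * qp (b * q) q n).
Definition HN (b q x : C) (N : nat) : C := csum (fun k => h b q x (S k)) N.
Definition EN (b q x : C) (n : nat) : C := qp (b * q * q / x) q n / qp (b * q * q) q n.

Section Shift.
Variables b q x : C.
Hypothesis hq : (Cmod q < 1)%R.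
Hypothesis hx0 : x <> 0.
Hypothesis hb : forall m, qp (b * q) q m <> 0.

Lemma hbb : forall m, qp (b * q * q) q m <> 0.
Proof. intros m H. apply (hb (S m)). rewrite qp_S_left, H. ring. Qed.

Lemma PT n : h b q x (S n) - h (b * q) q x (S n) =
  - (b * q) / (1 - b * q) * (x ^ n * EN b q x n - x ^ (S n) * EN b q x (S n)).
Proof.
  unfold h, EN. replace (S n - 1)%nat with n by lia.
  rewrite (qp_S_left (b * q / x)), (qp_S_left (b * q)).
  rewrite (qp_ext (b * q / x * q) (b * q * q / x)) by (unfold Cdiv; ring).
  rewrite (qp_S (b * q * q / x) q n), (qp_S (b * q * q) q n), (qp_S q q n), (Cpow_S x n).
  assert (H1 := hbb n). assert (H2 := qp_fac_ne0 _ _ n hbb). assert (H3 := qp_qq_ne0 q n hq).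
  assert (H4 := one_sub_powS_ne0 q n hq). simpl in H4.
  assert (H5 : 1 - b * q <> 0). { intro E. apply (hb 1%nat). simpl. rewrite <- E. ring. }
  field. repeat split; auto.
Qed.

Lemma shift_exact N : HN b q x N - HN (b * q) q x N = - (b * q) / (1 - b * q) * (1 - x ^ N * EN b q x N).
Proof.
  unfold HN.
  transitivity (csum (fun k => h b q x (S k) - h (b * q) q x (S k)) N).
  { rewrite (csum_ext (fun k => h b q x (S k) - h (b * q) q x (S k))
                      (fun k => h b q x (S k) + (-1) * h (b * q) q x (S k))) by (intros; ring).
    rewrite csum_add, csum_scal. ring. }
  rewrite (csum_ext _ _ _ (fun k _ => PT k)). rewrite csum_scal.
  rewrite (csum_telescope (fun k => x ^ k * EN b q x k)). unfold EN. simpl. f_equal. f_equal. f_equal. field.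
Qed.
End Shift.

Lemma qp_shift_lb (c q : C) : (Cmod q < 1)%R -> (forall m, qp c q m <> 0) ->
  exists d, (0 < d)%R /\ forall m k, (d <= Cmod (qp (c * q ^ m) q k))%R.
Proof.
  intros hq hc. destruct (qp_lower c q hq hc) as [d [Hd Hl]].
  exists (d / UB c q)%R. split. apply Rdiv_lt_0_compat; auto. apply UB_pos.
  intros m k. assert (E := qp_add c q m k).
  assert (H1 := Hl (m + k)%nat). rewrite E, Cmod_mult in H1.
  assert (H2 := qp_upper c q m hq). assert (H3 := Cmod_ge_0 (qp (c * q ^ m) q k)).
  assert (HU := UB_pos c q).
  apply (Rmult_le_reg_r (UB c q)); auto. unfold Rdiv. rewrite Rmult_assoc, Rinv_l by lra.
  rewrite Rmult_1_r. eapply Rle_trans. apply H1. rewrite Rmult_comm. apply Rmult_le_compat_l; auto.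
Qed.

Lemma qp_shift_ne0 (c q : C) m k : (forall m, qp c q m <> 0) -> qp (c * q ^ m) q k <> 0.
Proof. intros hc E. apply (hc (m + k)%nat). rewrite qp_add, E. ring. Qed.

Lemma HN_ext (w1 w2 q x : C) N : w1 = w2 -> HN w1 q x N = HN w2 q x N.
Proof. intros ->; auto. Qed.

Section ShiftBound.
Variables b q x : C.
Hypothesis hq : (Cmod q < 1)%R.
Hypothesis hx0 : x <> 0.
Hypothesis hb : forall m, qp (b * q) q m <> 0.

Lemma shift_bound : exists K, (0 <= K)%R /\ forall m N,
  (Cmod (HN (b * q ^ m) q x N - HN (b * q ^ S m) q x N + b * q ^ S m / (1 - b * q ^ S m))
     <= K * Cmod x ^ N)%R.
Proof.
  destruct (qp_shift_lb (b * q) q hq hb) as [d [Hd Hl]].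
  set (K := (Cmod (b * q) / d * (UB (b * q * q / x) q / d))%R).
  exists K. split.
  { unfold K. apply Rmult_le_pos; apply Rdiv_le_0_compat; auto; try apply Cmod_ge_0. left; apply UB_pos. }
  intros m N.
  assert (hbm : forall k, qp (b * q ^ m * q) q k <> 0).
  { intros k. rewrite (qp_ext _ (b * q * q ^ m)) by ring. apply qp_shift_ne0; auto. }
  assert (E1 := shift_exact (b * q ^ m) q x hq hx0 hbm N).
  rewrite (HN_ext (b * q ^ S m) (b * q ^ m * q)) by (rewrite Cpow_S; ring).
  replace (b * q ^ S m) with (b * q ^ m * q) by (rewrite Cpow_S; ring).
  replace (HN (b * q ^ m) q x N - HN (b * q ^ m * q) q x N + b * q ^ m * q / (1 - b * q ^ m * q))
    with (b * q ^ m * q / (1 - b * q ^ m * q) * (x ^ N * EN (b * q ^ m) q x N))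
    by (rewrite E1; unfold Cdiv; ring).
  assert (Hf : 1 - b * q ^ m * q <> 0).
  { intro E. apply (hbm 1%nat). simpl. rewrite <- E. ring. }
  assert (Hfl : (d <= Cmod (1 - b * q ^ m * q))%R).
  { specialize (Hl m 1%nat). simpl in Hl. replace (1 * (1 - b * q * q ^ m * 1)) with (1 - b * q ^ m * q) in Hl by ring. auto. }
  assert (Hnum : (Cmod (b * q ^ m * q) <= Cmod (b * q))%R).
  { replace (b * q ^ m * q) with (b * q * q ^ m) by ring. apply Cmod_mul_pow_le; auto. }
  assert (HEN : (Cmod (EN (b * q ^ m) q x N) <= UB (b * q * q / x) q / d)%R).
  { unfold EN. apply Cmod_div_le; auto.
    rewrite (qp_ext _ (b * q * q ^ S m)) by (rewrite Cpow_S; ring). apply qp_shift_ne0; auto.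
    eapply Rle_trans. apply qp_upper; auto. apply UB_mono; auto.
    replace (b * q ^ m * q * q / x) with (b * q * q / x * q ^ m) by (unfold Cdiv; ring). apply Cmod_mul_pow_le; auto.
    rewrite (qp_ext _ (b * q * q ^ S m)) by (rewrite Cpow_S; ring). apply Hl. }
  rewrite Cmod_mult, Cmod_mult, Cmod_pow.
  assert (H1 : (Cmod (b * q ^ m * q / (1 - b * q ^ m * q)) <= Cmod (b * q) / d)%R).
  { apply Cmod_div_le; auto. }
  unfold K. assert (0 <= Cmod x ^ N)%R by (apply pow_le, Cmod_ge_0).
  assert (0 <= Cmod (EN (b * q ^ m) q x N))%R by apply Cmod_ge_0.
  assert (0 <= Cmod (b * q ^ m * q / (1 - b * q ^ m * q)))%R by apply Cmod_ge_0.
  replace (Cmod (b * q) / d * (UB (b * q * q / x) q / d) * Cmod x ^ N)%R with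
    (Cmod (b * q) / d * (Cmod x ^ N * (UB (b * q * q / x) q / d)))%R by ring.
  apply Rmult_le_compat; auto. apply Rmult_le_pos; auto.
  apply Rmult_le_compat_l; auto.
Qed.
End ShiftBound.

Lemma h_zero (w q x : C) n : (Cmod q < 1)%R -> w = 0 -> h w q x (S n) = x ^ (S n) / (1 - q ^ (S n)).
Proof.
  intros hq ->. unfold h. rewrite (qp_ext (0 * q / x) 0) by (unfold Cdiv; ring).
  rewrite (qp_ext (0 * q) 0) by ring. rewrite !qp_zero. replace (S n - 1)%nat with n by lia.
  rewrite qp_S. assert (H1 := qp_qq_ne0 q n hq). assert (H2 := one_sub_powS_ne0 q n hq). simpl in H2.
  simpl. field. split; auto.
Qed.

Lemma UB_le3 (w q : C) : (Cmod q < 1)%R -> (Cmod w <= 1 - Cmod q)%R -> (UB w q <= 3)%R.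
Proof.
  intros hq Hw. unfold UB. eapply Rle_trans. apply exp_mono with (y := 1%R).
  apply (Rmult_le_reg_r (1 - Cmod q)). lra. unfold Rdiv. rewrite Rmult_assoc, Rinv_l by lra. lra.
  apply exp_le_3.
Qed.

Lemma qp_sub1_small (w q : C) n : (Cmod q < 1)%R -> (Cmod w <= (1 - Cmod q) / 6)%R ->
  (Cmod (qp w q n - 1) <= 3 * (Cmod w / (1 - Cmod q)))%R.
Proof.
  intros hq Hw. eapply Rle_trans. apply qp_sub1; auto. apply Rmult_le_compat_r.
  apply Rdiv_le_0_compat. apply Cmod_ge_0. lra. apply UB_le3; auto. lra.
Qed.

Lemma one_sub_powS_lb (q : C) n : (Cmod q < 1)%R -> (1 - Cmod q <= Cmod (1 - q ^ S n))%R.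
Proof.
  intros hq. eapply Rle_trans. 2: apply Cmod_1_sub. rewrite Cpow_S, Cmod_mult.
  assert (H := Cmod_pow_lt1 q n hq). assert (0 <= Cmod q)%R by apply Cmod_ge_0.
  assert (0 <= Cmod (q ^ n))%R by apply Cmod_ge_0. nra.
Qed.

Lemma rsum_ext_r (f g : nat -> R) n : (forall k, f k = g k) -> rsum f n = rsum g n.
Proof. intros H. induction n; simpl; auto. rewrite IHn, H. auto. Qed.

Section Lip.
Variables b q x : C.
Hypothesis hq : (Cmod q < 1)%R.
Hypothesis hx0 : x <> 0.
Hypothesis hxl : (Cmod x < 1)%R.

Lemma lip : exists C M0, (0 <= C)%R /\ forall m N, (m >= M0)%nat ->
  (Cmod (HN (b * q ^ m) q x N - HN 0 q x N) <= C * Cmod q ^ m)%R.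
Proof.
  set (r := Cmod q). assert (Hr0 : (0 <= r)%R) by apply Cmod_ge_0.
  assert (He : (0 < (1 - r) / 6)%R) by (unfold r; lra).
  destruct (small_pow (b * q / x) q _ hq He) as [M1 HM1].
  destruct (small_pow (b * q) q _ hq He) as [M2 HM2].
  set (C := (6 * (Cmod (b * q / x) + Cmod (b * q)) / ((1 - r) * (1 - r) * (1 - Cmod x)))%R).
  assert (Hx : (0 <= Cmod x)%R) by apply Cmod_ge_0.
  assert (HC : (0 <= C)%R).
  { unfold C. apply Rdiv_le_0_compat. assert (0 <= Cmod (b * q / x))%R by apply Cmod_ge_0.
    assert (0 <= Cmod (b * q))%R by apply Cmod_ge_0. lra.
    apply Rmult_lt_0_compat. apply Rmult_lt_0_compat; unfold r; lra. lra. }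
  exists C, (max M1 M2). split; auto. intros m N Hm.
  set (w := b * q ^ m).
  assert (Hu : (Cmod (w * q / x) <= (1 - r) / 6)%R).
  { replace (w * q / x) with (b * q / x * q ^ m) by (unfold w, Cdiv; ring). apply HM1. lia. }
  assert (Hv : (Cmod (w * q) <= (1 - r) / 6)%R).
  { replace (w * q) with (b * q * q ^ m) by (unfold w; ring). apply HM2. lia. }
  assert (Hu' : (Cmod (w * q / x) = Cmod (b * q / x) * r ^ m)%R).
  { replace (w * q / x) with (b * q / x * q ^ m) by (unfold w, Cdiv; ring). rewrite Cmod_mult, Cmod_pow. auto. }
  assert (Hv' : (Cmod (w * q) = Cmod (b * q) * r ^ m)%R).
  { replace (w * q) with (b * q * q ^ m) by (unfold w; ring). rewrite Cmod_mult, Cmod_pow. auto. }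
  assert (Hterm : forall n, (Cmod (h w q x (S n) - h 0 q x (S n)) <=
      Cmod x ^ (S n) * (6 * (Cmod (b * q / x) + Cmod (b * q)) * r ^ m / ((1 - r) * (1 - r))))%R).
  { intros n.
    assert (Hvl := qp_lower_small (w * q) q (S n) hq (small_cond _ _ hq Hv)).
    assert (Hvn : qp (w * q) q (S n) <> 0).
    { intro E. rewrite E, Cmod_0 in Hvl. lra. }
    rewrite (h_zero 0 q x n hq eq_refl).
    assert (E : h w q x (S n) - x ^ S n / (1 - q ^ S n) =
       x ^ S n / (1 - q ^ S n) * ((qp (w * q / x) q (S n) - 1) - (qp (w * q) q (S n) - 1)) / qp (w * q) q (S n)).
    { unfold h. replace (S n - 1)%nat with n by lia. rewrite (qp_S q q n).
      assert (H1 := qp_qq_ne0 q n hq). assert (H2 := one_sub_powS_ne0 q n hq).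
      rewrite Cpow_S in H2. rewrite !(Cpow_S q n). field. repeat split; auto. }
    rewrite E. clear E.
    assert (H1 := qp_sub1_small _ q (S n) hq Hu). assert (H2 := qp_sub1_small _ q (S n) hq Hv).
    assert (Hd := one_sub_powS_lb q n hq). fold r in Hd, H1, H2.
    rewrite Cmod_div by auto. rewrite Cmod_mult. rewrite Cmod_div by (apply one_sub_powS_ne0; auto).
    rewrite Cmod_pow.
    assert (H3 := Cmod_sub_le (qp (w * q / x) q (S n) - 1) (qp (w * q) q (S n) - 1)).
    set (A := Cmod (qp (w * q / x) q (S n) - 1 - (qp (w * q) q (S n) - 1))) in *.
    set (B := Cmod (qp (w * q) q (S n))) in *.
    set (D := Cmod (1 - q ^ S n)) in *.
    assert (HA : (A <= 6 * (Cmod (b * q / x) + Cmod (b * q)) * r ^ m / (1 - r) / 2)%R).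
    { rewrite Hu', Hv' in *. unfold Rdiv in *. nra. }
    assert (0 <= A)%R by (unfold A; apply Cmod_ge_0).
    assert (0 <= Cmod x ^ S n)%R by (apply pow_le; auto).
    assert (Hr1 : (0 < 1 - r)%R) by (unfold r; lra).
    assert (HD0 : (0 < D)%R) by lra.
    assert (HB0 : (0 < B)%R) by lra.
    assert (Hq : (Cmod x ^ S n / D * A / B <= Cmod x ^ S n / (1 - r) * A / (/ 2))%R).
    { unfold Rdiv. apply Rmult_le_compat. apply Rmult_le_pos. apply Rmult_le_pos; auto. left; apply Rinv_0_lt_compat; auto. auto.
      left; apply Rinv_0_lt_compat; auto.
      apply Rmult_le_compat_r; auto. apply Rmult_le_compat_l; auto. apply Rinv_le_contravar; auto.
      apply Rinv_le_contravar; auto. lra. }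
    eapply Rle_trans. apply Hq.
    replace (Cmod x ^ S n / (1 - r) * A / / 2)%R with (Cmod x ^ S n * (2 * A / (1 - r)))%R by (field; lra).
    apply Rmult_le_compat_l; auto.
    replace (6 * (Cmod (b * q / x) + Cmod (b * q)) * r ^ m / ((1 - r) * (1 - r)))%R with
       (2 * (6 * (Cmod (b * q / x) + Cmod (b * q)) * r ^ m / (1 - r) / 2) / (1 - r))%R by (field; lra).
    unfold Rdiv. apply Rmult_le_compat_r. left; apply Rinv_0_lt_compat; auto. lra. }
  unfold HN.
  replace (csum (fun k => h w q x (S k)) N - csum (fun k => h 0 q x (S k)) N) with
    (csum (fun k => h w q x (S k) - h 0 q x (S k)) N).
  2:{ rewrite (csum_ext (fun k => h w q x (S k) - h 0 q x (S k)) (fun k => h w q x (S k) + (-1) * h 0 q x (S k)))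
        by (intros; ring). rewrite csum_add, csum_scal. ring. }
  eapply Rle_trans. apply Cmod_csum_le. eapply Rle_trans. apply rsum_le. intros k _. apply Hterm.
  set (c0 := (6 * (Cmod (b * q / x) + Cmod (b * q)) * r ^ m / ((1 - r) * (1 - r)))%R).
  assert (Hc0 : (0 <= c0)%R).
  { unfold c0. apply Rdiv_le_0_compat. apply Rmult_le_pos. assert (0 <= Cmod (b * q / x))%R by apply Cmod_ge_0.
    assert (0 <= Cmod (b * q))%R by apply Cmod_ge_0. lra. apply pow_le; auto.
    apply Rmult_lt_0_compat; unfold r; lra. }
  rewrite (rsum_ext_r (fun k => Cmod x ^ S k * c0)%R (fun k => c0 * Cmod x ^ S k)%R) by (intros; ring).
  rewrite rsum_scal.
  assert (Hs : (rsum (fun k => Cmod x ^ S k) N <= / (1 - Cmod x))%R).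
  { eapply Rle_trans. 2: apply (rsum_geom_le (Cmod x) N); auto. apply rsum_le. intros k _.
    simpl. assert (0 <= Cmod x ^ k)%R by (apply pow_le; auto). nra. }
  eapply Rle_trans. apply Rmult_le_compat_l. auto. apply Hs.
  unfold c0, C. apply Req_le. field. split; unfold r; lra.
Qed.
End Lip.

Lemma pow_2n (c : C) n : c ^ (2 * n) = (c * c) ^ n.
Proof. rewrite Cpow_mult_r. f_equal. simpl. ring. Qed.

Lemma negpow_2n (c : C) n : (- c) ^ (2 * n) = (c * c) ^ n.
Proof. rewrite pow_2n. f_equal. ring. Qed.

Definition f3 (q x : C) (k : nat) : C := (x * x) ^ S k / (1 - (q * q) ^ S k).

Lemma pair_sum (q x : C) K :
  csum (fun k => x ^ S k / (1 - q ^ S k) + (- x) ^ S k / (1 - q ^ S k)) (2 * K) =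
  2 * csum (f3 q x) K.
Proof.
  induction K. simpl. ring.
  replace (2 * S K)%nat with (S (S (2 * K))) by lia.
  change (csum ?f (S (S ?n))) with (csum f n + f n + f (S n)). rewrite IHK.
  change (csum (f3 q x) (S K)) with (csum (f3 q x) K + f3 q x K).
  unfold f3.
  replace (S (S (2 * K))) with (2 * S K)%nat by lia.
  replace (S (2 * K)) with (S (2 * K))%nat by lia.
  rewrite (Cpow_S x (2 * K)), (Cpow_S (- x) (2 * K)), !negpow_2n, !pow_2n.
  unfold Cdiv. ring.
Qed.

Definition DD (q x : C) (N : nat) (w : C) : C :=
  HN w q x N + HN (- w) q (- x) N - 2 * HN (w * w) (q * q) (x * x) N.

Lemma Cmod_qq_lt (q : C) : (Cmod q < 1)%R -> (Cmod (q * q) < 1)%R.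
Proof. intros. rewrite Cmod_mult. assert (0 <= Cmod q)%R by apply Cmod_ge_0. nra. Qed.

Lemma Cmod_xx_pow (x : C) N : (Cmod x < 1)%R -> (Cmod (x * x) ^ N <= Cmod x ^ N)%R.
Proof.
  intros. rewrite Cmod_mult. rewrite Rpow_mult_distr.
  assert (0 <= Cmod x ^ N)%R by (apply pow_le, Cmod_ge_0).
  assert (Cmod x ^ N <= 1)%R by (apply pow_le_1; split; [apply Cmod_ge_0|lra]). nra.
Qed.

Section Final.
Variables b q x : C.
Hypothesis hq : (Cmod q < 1)%R.
Hypothesis hx0 : x <> 0.
Hypothesis hxl : (Cmod x < 1)%R.
Hypothesis hb1 : forall m, qp (b * q) q m <> 0.
Hypothesis hb2 : forall m, qp (- b * q) q m <> 0.
Hypothesis hb3 : forall m, qp (b * b * (q * q)) (q * q) m <> 0.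

Lemma D_step : exists K, (0 <= K)%R /\ forall m N,
  (Cmod (DD q x N (b * q ^ m) - DD q x N (b * q ^ S m)) <= K * Cmod x ^ N)%R.
Proof.
  assert (hnx : - x <> 0). { intro E. apply hx0. replace x with (- - x) by ring. rewrite E. ring. }
  assert (hxx : x * x <> 0) by (apply Cmult_neq_0; auto).
  destruct (shift_bound b q x hq hx0 hb1) as [K1 [HK1 H1]].
  destruct (shift_bound (- b) q (- x) hq hnx hb2) as [K2 [HK2 H2]].
  destruct (shift_bound (b * b) (q * q) (x * x) (Cmod_qq_lt q hq) hxx hb3) as [K3 [HK3 H3]].
  exists (K1 + K2 + 2 * K3)%R. split. lra. intros m N.
  specialize (H1 m N). specialize (H2 m N). specialize (H3 m N).
  rewrite Cmod_opp in H2.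
  assert (hv1 : 1 - b * q ^ S m <> 0).
  { rewrite Cpow_S. replace (1 - b * (q * q ^ m)) with (1 - b * q * q ^ m) by ring. apply qp_fac_ne0; auto. }
  assert (hv2 : 1 + b * q ^ S m <> 0).
  { rewrite Cpow_S. replace (1 + b * (q * q ^ m)) with (1 - - b * q * q ^ m) by ring. apply qp_fac_ne0; auto. }
  unfold DD.
  rewrite (HN_ext (- (b * q ^ m)) (- b * q ^ m)) by ring.
  rewrite (HN_ext (- (b * q ^ S m)) (- b * q ^ S m)) by ring.
  rewrite (HN_ext (b * q ^ m * (b * q ^ m)) (b * b * (q * q) ^ m)) by (rewrite Cpow_mult_l; ring).
  rewrite (HN_ext (b * q ^ S m * (b * q ^ S m)) (b * b * (q * q) ^ S m)) by (rewrite Cpow_mult_l; ring).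
  set (e1 := HN (b * q ^ m) q x N - HN (b * q ^ S m) q x N + b * q ^ S m / (1 - b * q ^ S m)) in *.
  set (e2 := HN (- b * q ^ m) q (- x) N - HN (- b * q ^ S m) q (- x) N + - b * q ^ S m / (1 - - b * q ^ S m)) in *.
  set (e3 := HN (b * b * (q * q) ^ m) (q * q) (x * x) N - HN (b * b * (q * q) ^ S m) (q * q) (x * x) N +
             b * b * (q * q) ^ S m / (1 - b * b * (q * q) ^ S m)) in *.
  assert (E : HN (b * q ^ m) q x N + HN (- b * q ^ m) q (- x) N - 2 * HN (b * b * (q * q) ^ m) (q * q) (x * x) N -
     (HN (b * q ^ S m) q x N + HN (- b * q ^ S m) q (- x) N - 2 * HN (b * b * (q * q) ^ S m) (q * q) (x * x) N)
     = e1 + e2 + (-2) * e3).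
  { unfold e1, e2, e3. set (v := b * q ^ S m) in *.
    replace (- b * q ^ S m) with (- v) by (unfold v; ring).
    replace (b * b * (q * q) ^ S m) with (v * v) by (unfold v; rewrite Cpow_mult_l; ring).
    assert (hv3 : 1 - v * v <> 0). { replace (1 - v * v) with ((1 - v) * (1 + v)) by ring. apply Cmult_neq_0; auto. }
    assert (hv4 : 1 - - v <> 0). { replace (1 - - v) with (1 + v) by ring. auto. }
    field. repeat split; auto. }
  rewrite E. eapply Rle_trans. apply Cmod_triangle. eapply Rle_trans. apply Rplus_le_compat_r. apply Cmod_triangle.
  rewrite Cmod_mult. replace (Cmod (-2)) with 2%R.
  2:{ rewrite Cmod_R. unfold Rabs. destruct Rcase_abs; lra. }
  assert (H4 := Cmod_xx_pow x N hxl).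
  assert (H2' : (Cmod e2 <= K2 * Cmod x ^ N)%R) by auto.
  nra.
Qed.

Lemma DD_ext (w1 w2 : C) N : w1 = w2 -> DD q x N w1 = DD q x N w2.
Proof. intros ->; auto. Qed.

Lemma D_iter : exists K, (0 <= K)%R /\ forall M N,
  (Cmod (DD q x N b - DD q x N (b * q ^ M)) <= INR M * K * Cmod x ^ N)%R.
Proof.
  destruct D_step as [K [HK H]]. exists K. split; auto. intros M N. induction M.
  rewrite (DD_ext (b * q ^ 0) b) by (simpl; ring). replace (DD q x N b - DD q x N b) with (RtoC 0) by ring.
  rewrite Cmod_0. simpl. lra.
  replace (DD q x N b - DD q x N (b * q ^ S M)) with
    ((DD q x N b - DD q x N (b * q ^ M)) + (DD q x N (b * q ^ M) - DD q x N (b * q ^ S M))) by ring.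
  eapply Rle_trans. apply Cmod_triangle. specialize (H M N). rewrite S_INR. lra.
Qed.

Lemma D_lip : exists C M0, (0 <= C)%R /\ forall m N, (m >= M0)%nat ->
  (Cmod (DD q x N (b * q ^ m) - DD q x N 0) <= C * Cmod q ^ m)%R.
Proof.
  assert (hnx : - x <> 0). { intro E. apply hx0. replace x with (- - x) by ring. rewrite E. ring. }
  assert (hxx : x * x <> 0) by (apply Cmult_neq_0; auto).
  assert (hnxl : (Cmod (- x) < 1)%R) by (rewrite Cmod_opp; auto).
  assert (hxxl : (Cmod (x * x) < 1)%R) by (apply Cmod_qq_lt; auto).
  destruct (lip b q x hq hxl) as [C1 [M1 [HC1 H1]]].
  destruct (lip (- b) q (- x) hq hnxl) as [C2 [M2 [HC2 H2]]].
  destruct (lip (b * b) (q * q) (x * x) (Cmod_qq_lt q hq) hxxl) as [C3 [M3 [HC3 H3]]].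
  exists (C1 + C2 + 2 * C3)%R, (max M1 (max M2 M3)). split. lra. intros m N Hm.
  specialize (H1 m N ltac:(lia)). specialize (H2 m N ltac:(lia)). specialize (H3 m N ltac:(lia)).
  unfold DD.
  rewrite (HN_ext (- (b * q ^ m)) (- b * q ^ m)) by ring.
  rewrite (HN_ext (b * q ^ m * (b * q ^ m)) (b * b * (q * q) ^ m)) by (rewrite Cpow_mult_l; ring).
  rewrite (HN_ext (- 0) 0) by ring. rewrite (HN_ext (0 * 0) 0) by ring.
  set (a1 := HN (b * q ^ m) q x N - HN 0 q x N) in *.
  set (a2 := HN (- b * q ^ m) q (- x) N - HN 0 q (- x) N) in *.
  set (a3 := HN (b * b * (q * q) ^ m) (q * q) (x * x) N - HN 0 (q * q) (x * x) N) in *.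
  replace (HN (b * q ^ m) q x N + HN (- b * q ^ m) q (- x) N - 2 * HN (b * b * (q * q) ^ m) (q * q) (x * x) N -
    (HN 0 q x N + HN 0 q (- x) N - 2 * HN 0 (q * q) (x * x) N)) with (a1 + a2 + (-2) * a3)
    by (unfold a1, a2, a3; ring).
  eapply Rle_trans. apply Cmod_triangle. eapply Rle_trans. apply Rplus_le_compat_r. apply Cmod_triangle.
  rewrite Cmod_mult. replace (Cmod (-2)) with 2%R.
  2:{ rewrite Cmod_R. unfold Rabs. destruct Rcase_abs; lra. }
  assert (Hqq : (Cmod (q * q) ^ m <= Cmod q ^ m)%R) by (apply Cmod_xx_pow; auto).
  assert (0 <= Cmod (a3))%R by apply Cmod_ge_0.
  nra.
Qed.

Lemma HN0 (q' x' : C) N : (Cmod q' < 1)%R -> HN 0 q' x' N = csum (fun k => x' ^ S k / (1 - q' ^ S k)) N.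
Proof. intros Hq'. unfold HN. apply csum_ext. intros k _. apply h_zero; auto. Qed.

Lemma D_zero : exists C0, (0 <= C0)%R /\ forall K, (Cmod (DD q x (2 * K) 0) <= C0 * Cmod x ^ K)%R.
Proof.
  set (s := Cmod (q * q)). assert (Hs : (s < 1)%R) by (apply Cmod_qq_lt; auto).
  assert (Hs0 : (0 <= s)%R) by apply Cmod_ge_0. assert (Hx : (0 <= Cmod x)%R) by apply Cmod_ge_0.
  exists (2 / ((1 - s) * (1 - Cmod x)))%R. split.
  { apply Rdiv_le_0_compat. lra. apply Rmult_lt_0_compat; lra. }
  intros K. unfold DD.
  rewrite (HN_ext (- 0) 0) by ring. rewrite (HN_ext (0 * 0) 0) by ring.
  rewrite !HN0 by (auto; apply Cmod_qq_lt; auto).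
  rewrite <- (csum_add (fun k => x ^ S k / (1 - q ^ S k))).
  rewrite pair_sum.
  replace (csum (fun k => (x * x) ^ S k / (1 - (q * q) ^ S k)) (2 * K)) with (csum (f3 q x) (K + K))
    by (f_equal; lia).
  rewrite csum_split.
  replace (2 * csum (f3 q x) K - 2 * (csum (f3 q x) K + csum (fun i => f3 q x (K + i)) K))
    with ((-2) * csum (fun i => f3 q x (K + i)) K) by ring.
  rewrite Cmod_mult. replace (Cmod (-2)) with 2%R.
  2:{ rewrite Cmod_R. unfold Rabs. destruct Rcase_abs; lra. }
  assert (Hb : (Cmod (csum (fun i => f3 q x (K + i)) K) <= Cmod x ^ K / ((1 - s) * (1 - Cmod x)))%R).
  { eapply Rle_trans. apply Cmod_csum_le.
    apply Rle_trans with (rsum (fun i => Cmod x ^ K / (1 - s) * Cmod x ^ i) K)%R.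
    { apply rsum_le. intros i _. unfold f3.
      apply Rle_trans with (Cmod x ^ S (K + i) / (1 - s))%R.
      apply Cmod_div_le. apply one_sub_powS_ne0. apply Cmod_qq_lt; auto.
      rewrite Cmod_pow. apply Cmod_xx_pow; auto. lra. apply one_sub_powS_lb. apply Cmod_qq_lt; auto.
      change (Cmod x ^ S (K + i))%R with (Cmod x * Cmod x ^ (K + i))%R. rewrite pow_add. unfold Rdiv.
      assert (0 <= Cmod x ^ K)%R by (apply pow_le; auto). assert (0 <= Cmod x ^ i)%R by (apply pow_le; auto).
      assert (0 < / (1 - s))%R by (apply Rinv_0_lt_compat; lra).
      assert (Cmod x * (Cmod x ^ K * Cmod x ^ i) <= Cmod x ^ K * Cmod x ^ i)%R.
      { assert (0 <= Cmod x ^ K * Cmod x ^ i)%R by (apply Rmult_le_pos; auto). nra. }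
      nra. }
    rewrite rsum_scal. unfold Rdiv. rewrite Rinv_mult.
    replace (Cmod x ^ K * / (1 - s) * rsum (fun i => Cmod x ^ i) K)%R with
      (Cmod x ^ K * / (1 - s) * rsum (fun i => Cmod x ^ i) K)%R by ring.
    rewrite <- Rmult_assoc. apply Rmult_le_compat_l.
    apply Rmult_le_pos. apply pow_le; auto. left; apply Rinv_0_lt_compat; lra.
    apply rsum_geom_le. lra. }
  replace (2 / ((1 - s) * (1 - Cmod x)) * Cmod x ^ K)%R with (2 * (Cmod x ^ K / ((1 - s) * (1 - Cmod x))))%R
    by (field; lra).
  lra.
Qed.
End Final.

Lemma le_eps (a b : R) : (forall eta, (eta > 0)%R -> (a <= b + eta)%R) -> (a <= b)%R.
Proof. intros H. apply Rnot_lt_le. intro Hl. specialize (H ((a - b) / 2)%R ltac:(lra)). lra. Qed.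

Theorem final_P2 (b q x F1 F2 F3 : C) :
  (Cmod q < 1)%R -> x <> 0 -> (Cmod x < 1)%R ->
  (forall m, qp (b * q) q m <> 0) -> (forall m, qp (- b * q) q m <> 0) ->
  (forall m, qp (b * b * (q * q)) (q * q) m <> 0) ->
  conv1 (h b q x) F1 -> conv1 (h (- b) q (- x)) F2 -> conv1 (h (b * b) (q * q) (x * x)) F3 ->
  F1 + F2 - 2 * F3 = 0.
Proof.
  intros hq hx0 hxl hb1 hb2 hb3 C1 C2 C3.
  set (Dl := F1 + F2 - 2 * F3).
  assert (HD : conv (fun K => DD q x (2 * K) b) Dl).
  { assert (H12 := conv_lin _ _ 1 1 _ _ C1 C2).
    assert (H := conv_lin _ _ 1 (-2) _ _ H12 C3).
    assert (H' := conv_sub _ _ (fun K => (2 * K)%nat) ltac:(intros; cbv beta; lia) H).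
    replace Dl with (1 * (1 * F1 + 1 * F2) + -2 * F3) by (unfold Dl; ring).
    eapply (conv_ext _ _ _ 0%nat); [| exact H']. intros n _. unfold DD, HN. simpl. ring. }
  destruct (D_iter b q x hq hx0 hxl hb1 hb2 hb3) as [K' [HK' HI]].
  destruct (D_lip b q x hq hx0 hxl) as [C [M0 [HC HL]]].
  destruct (D_zero q x hq hxl) as [C0 [HC0 HZ]].
  assert (Hx : (0 <= Cmod x < 1)%R) by (split; auto; apply Cmod_ge_0).
  assert (Claim1 : forall M, (M >= M0)%nat -> (Cmod Dl <= C * Cmod q ^ M)%R).
  { intros M HM. apply le_eps. intros eta Heta.
    assert (Hz : tozero (fun K => (INR M * K' + C0) * Cmod x ^ K)%R).
    { apply tozero_scal. assert (0 <= INR M)%R by apply pos_INR. nra. apply tozero_geom; auto. }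
    destruct (Hz eta Heta) as [N1 HN1].
    replace Dl with (Dl - 0) by ring.
    apply (conv_bound _ _ 0 _ N1 HD). intros K HK. specialize (HN1 K HK).
    replace (DD q x (2 * K) b - 0) with
      ((DD q x (2 * K) b - DD q x (2 * K) (b * q ^ M)) + (DD q x (2 * K) (b * q ^ M) - DD q x (2 * K) 0)
        + DD q x (2 * K) 0) by ring.
    eapply Rle_trans. apply Cmod_triangle. eapply Rle_trans. apply Rplus_le_compat_r. apply Cmod_triangle.
    specialize (HI M (2 * K)%nat). specialize (HL M (2 * K)%nat HM). specialize (HZ K).
    assert (Hp : (Cmod x ^ (2 * K) <= Cmod x ^ K)%R).
    { replace (2 * K)%nat with (K + K)%nat by lia. rewrite pow_add.
      assert (0 <= Cmod x ^ K)%R by (apply pow_le; lra). assert (Cmod x ^ K <= 1)%R by (apply pow_le_1; lra). nra. }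
    assert (0 <= INR M * K')%R by (apply Rmult_le_pos; auto; apply pos_INR).
    assert (INR M * K' * Cmod x ^ (2 * K) <= INR M * K' * Cmod x ^ K)%R by (apply Rmult_le_compat_l; auto).
    nra. }
  apply Cmod_eq_0. apply Rle_antisym. 2: apply Cmod_ge_0.
  apply le_eps. intros eta Heta.
  assert (Hz := tozero_scal _ C HC (tozero_geom (Cmod q) (conj (Cmod_ge_0 q) hq)) eta Heta).
  destruct Hz as [N HN]. specialize (HN (max N M0) ltac:(lia)). specialize (Claim1 (max N M0) ltac:(lia)).
  lra.
Qed.

Close Scope C_scope.
Require Import Defs.

Definition toC (u : Cx) : Complex.C := (Defs.Re u, Defs.Im u).

Lemma tC_add u v : toC (Cadd u v) = Cplus (toC u) (toC v).
Proof. reflexivity. Qed.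
Lemma tC_opp u : toC (Defs.Copp u) = Complex.Copp (toC u).
Proof. reflexivity. Qed.
Lemma tC_sub u v : toC (Csub u v) = Cminus (toC u) (toC v).
Proof. reflexivity. Qed.
Lemma tC_mul u v : toC (Cmul u v) = Cmult (toC u) (toC v).
Proof. reflexivity. Qed.
Lemma tC_inv u : toC (Defs.Cinv u) = Complex.Cinv (toC u).
Proof. unfold toC, Defs.Cinv, Complex.Cinv. simpl. f_equal; f_equal; ring. Qed.
Lemma tC_div u v : toC (Defs.Cdiv u v) = Complex.Cdiv (toC u) (toC v).
Proof. unfold Defs.Cdiv, Complex.Cdiv. rewrite tC_mul, tC_inv. reflexivity. Qed.
Lemma tC_1 : toC C1 = Complex.RtoC 1.
Proof. reflexivity. Qed.
Lemma tC_0 : toC C0 = Complex.RtoC 0.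
Proof. reflexivity. Qed.
Lemma tC_R r : toC (Defs.RtoC r) = Complex.RtoC r.
Proof. reflexivity. Qed.
Lemma tC_pow u n : toC (Defs.Cpow u n) = Complex.Cpow (toC u) n.
Proof. induction n. reflexivity. simpl Defs.Cpow. rewrite tC_mul, IHn. simpl. apply Cmult_comm. Qed.
Lemma tC_norm u : Cnorm u = Cmod (toC u).
Proof. unfold Cnorm, Cmod, toC. simpl. f_equal. ring. Qed.
Lemma tC_inj u v : toC u = toC v -> u = v.
Proof. destruct u, v. unfold toC. simpl. intros H. injection H. intros -> ->. reflexivity. Qed.
Lemma tC_ne0 u : u <> C0 -> toC u <> Complex.RtoC 0.
Proof. intros H E. apply H. apply tC_inj. rewrite E. reflexivity. Qed.

Lemma tC_qpoch x q n : toC (qpoch x q n) = qp (toC x) (toC q) n.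
Proof.
  induction n. reflexivity. simpl qpoch. rewrite tC_mul, IHn, tC_sub, tC_mul, tC_pow. reflexivity.
Qed.

Lemma tC_Csum0 f n : toC (Csum0 f n) = csum (fun k => toC (f k)) (S n).
Proof.
  induction n. simpl Csum0. simpl csum. ring.
  simpl Csum0. rewrite tC_add, IHn. reflexivity.
Qed.

Lemma tC_partial f N : toC (Cpartial1 f N) = csum (fun k => toC (f (S k))) N.
Proof. induction N. reflexivity. simpl Cpartial1. rewrite tC_add, IHN. reflexivity. Qed.

Lemma tC_series f l : Cseries1_to f l -> conv1 (fun n => toC (f n)) (toC l).
Proof.
  intros H eps He. destruct (H eps He) as [N HN]. exists N. intros n Hn. specialize (HN n Hn).
  rewrite tC_norm, tC_sub, tC_partial in HN. exact HN.
Qed.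

Lemma tC_abs f : Cseries1_abs_conv f -> exists M, Un_cv (sum_f_R0 (fun k => Cmod (toC (f (S k))))) M.
Proof.
  intros [M H]. exists M. replace (fun k => Cmod (toC (f (S k)))) with (fun k => Cnorm (f (S k))). auto.
  apply functional_extensionality. intros. apply tC_norm.
Qed.

Lemma tC_bailey a q (alpha beta : nat -> Cx) : bailey_pair a q alpha beta ->
  toC (alpha 0%nat) = Complex.RtoC 1 /\
  forall n, toC (beta n) = csum (fun j => Complex.Cdiv (toC (alpha j))
       (Cmult (qp (toC q) (toC q) (n - j)) (qp (toC (Cmul a q)) (toC q) (n + j)))) (S n).
Proof.
  intros [H0 [H1 H]]. split. rewrite H0. reflexivity.
  intros n. destruct n.
  - rewrite H1. simpl. rewrite H0. unfold toC. simpl. apply injective_projections; simpl; field.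
  - rewrite H by lia. rewrite tC_Csum0. apply csum_ext. intros j _.
    rewrite tC_div, tC_mul, !tC_qpoch. reflexivity.
Qed.

Lemma instance (Qx Zx Xx ax Pt : Cx) (alpha beta : nat -> Cx) (lB lA : Cx) :
  Cnorm Qx < 1 -> Cnorm Xx < 1 ->
  Cmult (toC Xx) (toC Zx) = toC (Cmul ax Qx) -> toC Pt = toC (Cmul ax Qx) ->
  (forall m, qpoch (Cmul ax Qx) Qx m <> C0) -> (forall m, qpoch Xx Qx m <> C0) ->
  bailey_pair ax Qx alpha beta ->
  Cseries1_abs_conv (fun n => Cmul (Cmul (Defs.Cdiv (Cmul (qpoch Zx Qx n) (qpoch Qx Qx (n - 1)))
                   (Cmul (qpoch Pt Qx n) (qpoch Xx Qx n))) (Defs.Cpow Xx n)) (alpha n)) ->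
  Cseries1_to (fun n => Cmul (Cmul (Cmul (qpoch Zx Qx n) (qpoch Qx Qx (n - 1)))
                 (Defs.Cpow Xx n)) (beta n)) lB ->
  Cseries1_to (fun n => Cmul (Cmul (Defs.Cdiv (Cmul (qpoch Zx Qx n) (qpoch Qx Qx (n - 1)))
                   (Cmul (qpoch Pt Qx n) (qpoch Xx Qx n))) (Defs.Cpow Xx n)) (alpha n)) lA ->
  conv1 (T (toC Qx) (toC Zx) (toC Xx) 0) (Cminus (toC lB) (toC lA)).
Proof.
  intros hQ hX hXZ hPt hd1 hd2 hB habs hBc hAc.
  rewrite tC_norm in hQ, hX.
  destruct (tC_bailey _ _ _ _ hB) as [ha0 hB'].
  destruct (tC_abs _ habs) as [MR hMR].
  assert (hP : forall m, qp (Cmult (toC Xx) (toC Zx)) (toC Qx) m <> Complex.RtoC 0).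
  { intros m. rewrite hXZ, <- tC_qpoch. apply tC_ne0. auto. }
  assert (hXn : forall m, qp (toC Xx) (toC Qx) m <> Complex.RtoC 0).
  { intros m. rewrite <- tC_qpoch. apply tC_ne0. auto. }
  apply (ML_main (toC Qx) (toC Zx) (toC Xx) hQ hX hP hXn (fun n => toC (alpha n)) (fun n => toC (beta n))
           _ _ MR ha0).
  - intros n. rewrite hB'. rewrite hXZ. reflexivity.
  - unfold tA. replace (fun k => Cmod
      (Cmult (Cmult (Complex.Cdiv (Cmult (qp (toC Zx) (toC Qx) (S k)) (qp (toC Qx) (toC Qx) (S k - 1)))
          (Cmult (qp (Cmult (toC Xx) (toC Zx)) (toC Qx) (S k)) (qp (toC Xx) (toC Qx) (S k))))
          (Complex.Cpow (toC Xx) (S k))) (toC (alpha (S k)))))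
     with (fun k => Cmod (toC (Cmul (Cmul (Defs.Cdiv (Cmul (qpoch Zx Qx (S k)) (qpoch Qx Qx (S k - 1)))
                   (Cmul (qpoch Pt Qx (S k)) (qpoch Xx Qx (S k)))) (Defs.Cpow Xx (S k))) (alpha (S k))))).
    auto.
    apply functional_extensionality. intros k.
    rewrite !tC_mul, tC_div, !tC_mul, !tC_qpoch, tC_pow, hPt, hXZ. reflexivity.
  - assert (H := tC_series _ _ hBc). unfold conv1 in *. unfold tB.
    eapply (conv_ext _ _ _ 0%nat); [| exact H]. intros n _. apply csum_ext. intros k _.
    rewrite !tC_mul, !tC_qpoch, tC_pow. reflexivity.
  - assert (H := tC_series _ _ hAc). unfold conv1 in *. unfold tA.
    eapply (conv_ext _ _ _ 0%nat); [| exact H]. intros n _. apply csum_ext. intros k _.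
    rewrite !tC_mul, tC_div, !tC_mul, !tC_qpoch, tC_pow, hPt, hXZ. reflexivity.
Qed.

Lemma csum_zero n : csum (fun _ => Complex.RtoC 0) n = Complex.RtoC 0.
Proof. induction n. reflexivity. simpl. rewrite IHn. ring. Qed.

Lemma T_zeroX (Q Z X F : Complex.C) : X = Complex.RtoC 0 -> conv1 (T Q Z X 0) F -> F = Complex.RtoC 0.
Proof.
  intros HX H. unfold conv1 in H.
  assert (E : forall N, csum (fun k => T Q Z X 0 (S k)) N = Complex.RtoC 0).
  { intros N. rewrite <- (csum_zero N). apply csum_ext. intros k _. unfold T. rewrite HX.
    simpl. unfold Complex.Cdiv. ring. }
  apply (conv_unique (fun N => csum (fun k => T Q Z X 0 (S k)) N)); auto.
  eapply (conv_ext _ _ _ 0%nat); [| apply conv_const]. intros n _. cbv beta. rewrite E. reflexivity.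
Qed.

Lemma T_to_h (Q Z X A : Complex.C) : X <> Complex.RtoC 0 -> Z <> Complex.RtoC 0 ->
  Cmult X Z = Cmult A Q -> forall n, T Q Z X 0 n = h A Q X n.
Proof.
  intros hX hZ hXZ n. unfold T, h. rewrite Nat.sub_0_r, Nat.add_0_r.
  rewrite (qp_ext (Cmult X Z) (Cmult A Q)) by auto.
  rewrite (qp_ext Z (Complex.Cdiv (Cmult A Q) X)). reflexivity.
  rewrite <- hXZ. field. auto.
Qed.

Open Scope R_scope.

Theorem corollary2p5
  (alpha beta : Cx -> Cx -> nat -> Cx) (a q z : Cx)
  (hq : Cnorm q < 1)
  (hBa : bailey_pair a q (alpha a q) (beta a q))
  (hBna : bailey_pair (Copp a) q (alpha (Copp a) q) (beta (Copp a) q))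
  (hBa2 : bailey_pair (Cmul a a) (Cmul q q)
            (alpha (Cmul a a) (Cmul q q)) (beta (Cmul a a) (Cmul q q)))
  (hz : Cnorm (Cmul q a) < Cnorm z)
  (* no denominator vanishes *)
  (hd1 : forall m, qpoch (Cmul a q) q m <> C0)
  (hd2 : forall m, qpoch (Cmul (Copp a) q) q m <> C0)
  (hd3 : forall m, qpoch (Cmul (Cmul a a) (Cmul q q)) (Cmul q q) m <> C0)
  (hd4 : forall m, qpoch (Cmul q a) q m <> C0)
  (hd5 : forall m, qpoch (Cdiv (Cmul q a) z) q m <> C0)
  (hd6 : forall m, qpoch (Copp (Cmul q a)) q m <> C0)
  (hd7 : forall m, qpoch (Cdiv (Copp (Cmul q a)) z) q m <> C0)
  (hd8 : forall m, qpoch (Cmul (Cmul q q) (Cmul a a)) (Cmul q q) m <> C0)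
  (hd9 : forall m, qpoch (Cdiv (Cmul (Cmul q q) (Cmul a a)) (Cmul z z)) (Cmul q q) m <> C0)
  (lB1 lB2 lB3 lA1 lA2 lA3 : Cx) :
  let q2 := Cmul q q in
  let a2 := Cmul a a in
  let z2 := Cmul z z in
  let tB1 := fun n => Cmul (Cmul (Cmul (qpoch z q n) (qpoch q q (n - 1)))
                 (Cpow (Cdiv (Cmul q a) z) n)) (beta a q n) in
  let tB2 := fun n => Cmul (Cmul (Cmul (qpoch z q n) (qpoch q q (n - 1)))
                 (Cpow (Cdiv (Copp (Cmul q a)) z) n)) (beta (Copp a) q n) in
  let tB3 := fun n => Cmul (Cmul (Cmul (qpoch z2 q2 n) (qpoch q2 q2 (n - 1)))
                 (Cpow (Cdiv (Cmul q2 a2) z2) n)) (beta a2 q2 n) in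
  let tA1 := fun n => Cmul (Cmul (Cdiv (Cmul (qpoch z q n) (qpoch q q (n - 1)))
                   (Cmul (qpoch (Cmul q a) q n) (qpoch (Cdiv (Cmul q a) z) q n)))
                 (Cpow (Cdiv (Cmul q a) z) n)) (alpha a q n) in
  let tA2 := fun n => Cmul (Cmul (Cdiv (Cmul (qpoch z q n) (qpoch q q (n - 1)))
                   (Cmul (qpoch (Copp (Cmul q a)) q n)
                         (qpoch (Cdiv (Copp (Cmul q a)) z) q n)))
                 (Cpow (Cdiv (Copp (Cmul q a)) z) n)) (alpha (Copp a) q n) in
  let tA3 := fun n => Cmul (Cmul (Cdiv (Cmul (qpoch z2 q2 n) (qpoch q2 q2 (n - 1)))
                   (Cmul (qpoch (Cmul q2 a2) q2 n) (qpoch (Cdiv (Cmul q2 a2) z2) q2 n)))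
                 (Cpow (Cdiv (Cmul q2 a2) z2) n)) (alpha a2 q2 n) in
  Cseries1_abs_conv tB1 -> Cseries1_abs_conv tB2 -> Cseries1_abs_conv tB3 ->
  Cseries1_abs_conv tA1 -> Cseries1_abs_conv tA2 -> Cseries1_abs_conv tA3 ->
  Cseries1_to tB1 lB1 -> Cseries1_to tB2 lB2 -> Cseries1_to tB3 lB3 ->
  Cseries1_to tA1 lA1 -> Cseries1_to tA2 lA2 -> Cseries1_to tA3 lA3 ->
  Csub (Cadd lB1 lB2) (Cmul (RtoC 2) lB3) = Csub (Cadd lA1 lA2) (Cmul (RtoC 2) lA3).
Proof.
  intros q2 a2 z2 tB1 tB2 tB3 tA1 tA2 tA3 hab1 hab2 hab3 hab4 hab5 hab6 hB1 hB2 hB3 hA1 hA2 hA3.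
  assert (hZ : toC z <> Complex.RtoC 0).
  { intro E. assert (H := tC_norm z). rewrite E, Cmod_0 in H.
    assert (H2 := Cmod_ge_0 (toC (Cmul q a))). rewrite <- tC_norm in H2. lra. }
  assert (hQ : Cmod (toC q) < 1) by (rewrite <- tC_norm; auto).
  set (Q := toC q) in *. set (A := toC a). set (Zc := toC z) in *.
  assert (EX1 : toC (Defs.Cdiv (Cmul q a) z) = Complex.Cdiv (Cmult Q A) Zc) by (rewrite tC_div, tC_mul; reflexivity).
  assert (EX2 : toC (Defs.Cdiv (Defs.Copp (Cmul q a)) z) = Complex.Copp (Complex.Cdiv (Cmult Q A) Zc)).
  { rewrite tC_div, tC_opp, tC_mul. fold Q A Zc. field. auto. }
  assert (EX3 : toC (Defs.Cdiv (Cmul q2 a2) z2) = Cmult (Complex.Cdiv (Cmult Q A) Zc) (Complex.Cdiv (Cmult Q A) Zc)).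
  { unfold q2, a2, z2. rewrite tC_div, !tC_mul. fold Q A Zc. field. auto. }
  set (Xc := Complex.Cdiv (Cmult Q A) Zc) in *.
  assert (hXl : Cmod Xc < 1).
  { unfold Xc. rewrite Cmod_div by auto. unfold Q, A, Zc. rewrite <- tC_mul, <- !tC_norm.
    assert (0 < Cnorm z) by (rewrite tC_norm; apply Cmod_pos_of_ne; auto).
    apply (Rmult_lt_reg_r (Cnorm z)); auto. unfold Rdiv. rewrite Rmult_assoc, Rinv_l by lra. lra. }
  assert (hXZ : Cmult Xc Zc = Cmult A Q) by (unfold Xc; field; auto).
  assert (R1 := instance q z (Defs.Cdiv (Cmul q a) z) a (Cmul q a) (alpha a q) (beta a q) lB1 lA1
     hq ltac:(rewrite tC_norm, EX1; auto) ltac:(rewrite EX1; exact hXZ)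
     ltac:(rewrite !tC_mul; fold Q A; ring) hd1 hd5 hBa hab4 hB1 hA1).
  assert (R2 := instance q z (Defs.Cdiv (Defs.Copp (Cmul q a)) z) (Defs.Copp a) (Defs.Copp (Cmul q a))
     (alpha (Defs.Copp a) q) (beta (Defs.Copp a) q) lB2 lA2
     hq ltac:(rewrite tC_norm, EX2, Cmod_opp; auto)
     ltac:(rewrite EX2, tC_mul, tC_opp; fold Q A Zc; unfold Xc; field; auto)
     ltac:(rewrite tC_opp, !tC_mul, tC_opp; fold Q A; ring) hd2 hd7 hBna hab5 hB2 hA2).
  assert (hQ2 : Cnorm q2 < 1) by (unfold q2; rewrite tC_norm, tC_mul; apply Cmod_qq_lt; auto).
  assert (R3 := instance q2 z2 (Defs.Cdiv (Cmul q2 a2) z2) a2 (Cmul q2 a2)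
     (alpha a2 q2) (beta a2 q2) lB3 lA3
     hQ2 ltac:(rewrite tC_norm, EX3; apply Cmod_qq_lt; auto)
     ltac:(rewrite EX3; unfold z2, a2, q2; rewrite !tC_mul; fold Q A Zc; unfold Xc; field; auto)
     ltac:(unfold q2, a2; rewrite !tC_mul; fold Q A; ring) hd3 hd9 hBa2 hab6 hB3 hA3).
  rewrite EX1 in R1. rewrite EX2 in R2. rewrite EX3 in R3.
  unfold z2, q2 in R3. rewrite !tC_mul in R3. fold Q Zc in R1, R2, R3.
  apply tC_inj. rewrite !tC_sub, !tC_add, !tC_mul, !tC_R.
  apply Cdiff_eq0.
  set (F1 := Cminus (toC lB1) (toC lA1)) in *.
  set (F2 := Cminus (toC lB2) (toC lA2)) in *.
  set (F3 := Cminus (toC lB3) (toC lA3)) in *.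
  transitivity (Cplus (Cplus F1 F2) (Cmult (Complex.RtoC (-2)) F3)).
  { unfold F1, F2, F3. ring. }
  destruct (Ceq_dec Xc (Complex.RtoC 0)) as [HX0 | HX0].
  - rewrite (T_zeroX _ _ _ _ HX0 R1).
    rewrite (T_zeroX _ _ (Complex.Copp Xc) _ ltac:(rewrite HX0; ring) R2).
    rewrite (T_zeroX _ _ (Cmult Xc Xc) _ ltac:(rewrite HX0; ring) R3). ring.
  - assert (hb1 : forall m, qp (Cmult A Q) Q m <> Complex.RtoC 0).
    { intros m. unfold Q, A. rewrite <- tC_mul, <- tC_qpoch. apply tC_ne0. apply hd1. }
    assert (hb2 : forall m, qp (Cmult (Complex.Copp A) Q) Q m <> Complex.RtoC 0).
    { intros m. unfold Q, A. rewrite <- tC_opp, <- tC_mul, <- tC_qpoch. apply tC_ne0. apply hd2. }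
    assert (hb3 : forall m, qp (Cmult (Cmult A A) (Cmult Q Q)) (Cmult Q Q) m <> Complex.RtoC 0).
    { intros m. unfold Q, A. rewrite <- !tC_mul, <- tC_qpoch. apply tC_ne0. apply hd3. }
    assert (C1' : conv1 (h A Q Xc) F1).
    { unfold conv1 in *. eapply (conv_ext _ _ _ 0%nat); [| exact R1]. intros n _. apply csum_ext.
      intros k _. apply T_to_h; auto. }
    assert (C2' : conv1 (h (Complex.Copp A) Q (Complex.Copp Xc)) F2).
    { unfold conv1 in *. eapply (conv_ext _ _ _ 0%nat); [| exact R2]. intros n _. apply csum_ext.
      intros k _. apply T_to_h; auto. intro E. apply HX0. replace Xc with (Complex.Copp (Complex.Copp Xc)) by ring.
      rewrite E. ring. rewrite <- (Cmult_comm Zc). replace (Cmult Zc (Complex.Copp Xc)) with (Complex.Copp (Cmult Xc Zc)) by ring.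
      rewrite hXZ. ring. }
    assert (C3' : conv1 (h (Cmult A A) (Cmult Q Q) (Cmult Xc Xc)) F3).
    { unfold conv1 in *. eapply (conv_ext _ _ _ 0%nat); [| exact R3]. intros n _. apply csum_ext.
      intros k _. apply T_to_h; auto. apply Cmult_neq_0; auto. apply Cmult_neq_0; auto.
      replace (Cmult (Cmult Xc Xc) (Cmult Zc Zc)) with (Cmult (Cmult Xc Zc) (Cmult Xc Zc)) by ring.
      rewrite hXZ. ring. }
    assert (HF := final_P2 A Q Xc F1 F2 F3 hQ HX0 hXl hb1 hb2 hb3 C1' C2' C3').
    rewrite <- HF. ring.
Qed.
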